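(* Let $a>0$, $m\in\mathbb{N}$, and let $T=(T_k)\in\mathcal{T}$ satisfy $$\exp\left(\int_0^x\log\bigl(1-P_1(T_k(\alpha))\bigr)\,d\alpha\right)+\prod_{i=1}^k\bigl(1-P_2(T_i(x))\bigr)=1\qquad\text{for all }0<x\le a,\ 1\le k\le m.$$ Then any pair of $T$-strategies (one for each player) is an equilibrium situation (saddle point) of the game $G_{am}(P,A)$, i.e. for every consumption function $\alpha$ of Player I and every action-moment vector $\eta$ of Player II, the realized payoffs satisfy $K(\alpha;\eta^T)\le v_m(a)\le K(\alpha^T;\eta)$, where $\alpha^T$ (resp. $\eta^T$) is the play realized by Player I's (resp. Player II's) $T$-strategy against $\eta$ (resp. $\alpha$). The value of the game is $$v_m(a)=A_1-(A_1+A_2)\exp\left(\int_0^a\log\bigl(1-P_1(T_m(\alpha))\bigr)\,d\alpha\right)=(A_1+A_2)\prod_{i=1}^m\bigl(1-P_2(T_i(a))\bigr)-A_2 .$$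
   Context: The game $G_{am}(P,A)$ (noisy fighter-bomber duel). Two players act during $[0,1]$. Player I has an infinitely divisible resource $a>0$; Player II has $m\in\mathbb{Z}_{\ge0}$ indivisible units. Effectiveness functions $P_1,P_2:[0,1]\to[0,1]$ are continuously differentiable, increasing, $P_j(0)=0$, $P_j(1)=1$, $P_j(t)<1$ for $t<1$; $p=1-P_1$, $q=1-P_2$. Profits $A_1,A_2>0$. Player I's consumption function $\alpha(t)$ (remaining resource) is nonincreasing, continuous, piecewise $C^1$ on $(0,1)$, $\alpha(0)=a$; intensity $\xi=-\alpha'$. Player II's consumption function $n(t)$ is a nonincreasing left-continuous step function with $n(0)=m$; its jump points $0\le\eta_m\le\dots\le\eta_1\le1$ are his action moments, $\eta=(\eta_1,\dots,\eta_m)$. If Player II does not act in $[t_1,t_2]$, Player I succeeds there with probability $\varphi(\alpha,t_1,t_2)=1-\exp\bigl(-\int_{t_1}^{t_2}\log(1-P_1(\tau))\,d\alpha(\tau)\bigr)$; a unit used by Player II at time $t$ succeeds with probability $P_2(t)$. The game stops at the first success; the successful player $j$ gets $A_j$ from the other; payoff $0$ if nobody or both succeed simultaneously. A player not having exhausted his resource consumes it by time $1$ so as to succeed with probability $1$. Expected payoff to Player I: for $m=0$, $K=A_1$ if $a>0$, $K=0$ if $a=0$; for $m\ge1$, $K(\alpha;\eta_1,\dots,\eta_m)=A_1\varphi(\alpha,0,\eta_m)-A_2(1-\varphi(\alpha,0,\eta_m))P_2(\eta_m)+(1-P_2(\eta_m))(1-\varphi(\alpha,0,\eta_m))K(\alpha_m;\eta_1,\dots,\eta_{m-1})$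 with $\alpha_m=\alpha(\eta_m)$ on $[0,\eta_m)$ and $\alpha_m=\alpha$ on $[\eta_m,1]$. The duel is noisy: at each moment each player knows both players' current remaining resources $\alpha,n$. A strategy of Player I is a rule $\xi=u(t,\alpha,n)$ giving his consumption intensity; a strategy of Player II is a rule $\eta_n=v(\alpha,n)$ giving his next action moment. The class $\mathcal{T}$: sequences $T=(T_1,T_2,\dots)$ of functions on $[0,\infty)$, each continuous on $[0,\infty)$ and $C^1$ on $(0,\infty)$, with $0<T_k\le1$, $T_k'(x)<0$ and $T_{k+1}(x)<T_k(x)$ for $x>0$, and $T_k(0)=1$. $T$-strategies: with $\alpha,n$ the current remaining resources at time $t$, Player I uses intensity $\xi^T(t)=0$ if $t<T_n(\alpha)$ and $\xi^T(t)=-1/T_n'(\alpha)$ if $t=T_n(\alpha)$; Player II's next action moment is $\eta^T=T_n(\alpha)$. *)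

(* Defs.v *)
From Stdlib Require Import Reals Lra Lia ClassicalEpsilon.
Open Scope R_scope.

Fixpoint fsum (N : nat) (f : nat -> R) : R :=
  match N with O => 0 | S n => fsum n f + f n end.

Fixpoint prodR (k : nat) (f : nat -> R) : R :=
  match k with O => 1 | S n => prodR n f * f (S n) end.

(* Riemann integral of f over [a,b] (0 if f is not Riemann integrable) *)
Definition Rint (f : R -> R) (a b : R) : R :=
  match excluded_middle_informative (inhabited (Riemann_integrable f a b)) with
  | left H => RiemannInt (@epsilon _ H (fun _ => True))
  | right _ => 0
  end.

(* exp( \int_0^x g ), the integral being improper at 0 (value 0 if the
   integral is -infinity): the limit, as e -> 0+, of exp(\int_e^x g). *)
Definition exp_int0 (g : R -> R) (x : R) : R :=
  @epsilon R (inhabits 0)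
    (fun l => limit1_in (fun e => exp (Rint g e x)) (fun e => 0 < e <= x) l 0).

Definition tagged_partition (s u : R) (N : nat) (x y : nat -> R) : Prop :=
  x 0%nat = s /\ x N = u /\
  (forall i, (i < N)%nat -> x i < x (S i) /\ x i <= y i <= x (S i)).

Definition RS_sum (h g : R -> R) (N : nat) (x y : nat -> R) : R :=
  fsum N (fun i => h (y i) * (g (x (S i)) - g (x i))).

Definition is_RS_integral (h g : R -> R) (s u I : R) : Prop :=
  forall eps, 0 < eps -> exists delta, 0 < delta /\
    forall N x y, tagged_partition s u N x y ->
      (forall i, (i < N)%nat -> x (S i) - x i < delta) ->
      Rabs (RS_sum h g N x y - I) < eps.

Definition RS_int (h g : R -> R) (s u : R) : R :=
  @epsilon R (inhabits 0) (is_RS_integral h g s u).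

Definition deriv_within01 (f : R -> R) (t l : R) : Prop :=
  limit1_in (fun s => (f s - f t) / (s - t)) (fun s => 0 <= s <= 1 /\ s <> t) l t.

Definition effectiveness (P : R -> R) : Prop :=
  P 0 = 0 /\ P 1 = 1 /\
  (forall t, 0 <= t < 1 -> P t < 1) /\
  (forall t, 0 <= t <= 1 -> 0 <= P t <= 1) /\
  (forall s t, 0 <= s -> s < t -> t <= 1 -> P s < P t) /\
  exists dP : R -> R,
    (forall t, 0 <= t <= 1 -> deriv_within01 P t (dP t)) /\
    (forall t, 0 <= t <= 1 -> limit1_in dP (fun s => 0 <= s <= 1) (dP t) t).

Definition piecewise_C1_01 (f : R -> R) : Prop :=
  exists (N : nat) (s : nat -> R),
    s 0%nat = 0 /\ s N = 1 /\
    (forall j, (j < N)%nat -> s j < s (S j)) /\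
    (forall j, (j < N)%nat -> exists df : R -> R,
       forall t, s j < t < s (S j) ->
         derivable_pt_lim f t (df t) /\ continuity_pt df t).

Definition consumption_fn (a : R) (alpha : R -> R) : Prop :=
  alpha 0 = a /\
  (forall s t, 0 <= s -> s <= t -> t <= 1 -> alpha t <= alpha s) /\
  (forall t, 0 <= t <= 1 -> 0 <= alpha t) /\
  (forall t, 0 <= t <= 1 -> limit1_in alpha (fun s => 0 <= s <= 1) (alpha t) t) /\
  piecewise_C1_01 alpha.

Definition action_moments (m : nat) (eta : nat -> R) : Prop :=
  (forall k, (1 <= k <= m)%nat -> 0 <= eta k <= 1) /\
  (forall k, (1 <= k)%nat -> (k < m)%nat -> eta (S k) <= eta k).

Definition lnq (P1 : R -> R) (t : R) : R := ln (1 - P1 t).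

(* phi(alpha,0,t) = 1 - exp(- \int_0^t log(1-P1) d alpha); at t = 1 the
   Stieltjes integral is improper (log(1-P1(1)) = -infinity) and is taken
   as the limit u -> 1-. *)
Definition phi (P1 : R -> R) (alpha : R -> R) (t : R) : R :=
  if Rlt_dec t 1 then 1 - exp (- RS_int (lnq P1) alpha 0 t)
  else 1 - @epsilon R (inhabits 0)
             (fun l => limit1_in (fun u => exp (- RS_int (lnq P1) alpha 0 u))
                                 (fun u => 0 <= u < 1) l 1).

Definition freeze (alpha : R -> R) (e : R) : R -> R :=
  fun t => if Rlt_dec t e then alpha e else alpha t.

Fixpoint Kpay (P1 P2 : R -> R) (A1 A2 : R) (m : nat) (eta : nat -> R)
         (alpha : R -> R) : R :=
  match m with
  | O => if Rlt_dec 0 (alpha 0) then A1 else 0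
  | S m' =>
      let e := eta m in
      let f := phi P1 alpha e in
      A1 * f - A2 * (1 - f) * P2 e
      + (1 - P2 e) * (1 - f) * Kpay P1 P2 A1 A2 m' eta (freeze alpha e)
  end.

(* the class \mathcal{T} (T_k for k >= 1; T 0 is unused) *)
Definition class_T (T : nat -> R -> R) : Prop :=
  forall k, (1 <= k)%nat ->
    T k 0 = 1 /\
    limit1_in (T k) (fun x => 0 <= x) (T k 0) 0 /\
    (forall x, 0 < x -> 0 < T k x <= 1) /\
    (forall x, 0 < x -> T (S k) x < T k x) /\
    exists dT : R -> R, forall x, 0 < x ->
      derivable_pt_lim (T k) x (dT x) /\ dT x < 0 /\ continuity_pt dT x.

(* start of the period during which Player II holds k units:
   0 for k = m, eta_(k+1) otherwise *)
Definition prev_moment (m : nat) (eta : nat -> R) (k : nat) : R :=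
  if Nat.eqb k m then 0 else eta (S k).

(* eta is the play of Player II's T-strategy against alpha:
   holding k units, he acts at the first moment t with t >= T_k(alpha(t)) *)
Definition T_response_II (T : nat -> R -> R) (m : nat) (alpha : R -> R)
           (eta : nat -> R) : Prop :=
  forall k, (1 <= k <= m)%nat ->
    prev_moment m eta k <= eta k /\
    T k (alpha (eta k)) <= eta k /\
    (forall t, prev_moment m eta k <= t < eta k -> t < T k (alpha t)).

(* alpha is the play of Player I's T-strategy against eta: while Player II
   holds k units, alpha(t) is the largest x <= (resource at the start of the
   period) with T_k(x) >= t, i.e. alpha is kept constant while t < T_k(alpha)
   and then follows the curve t = T_k(alpha) (intensity -1/T_k'(alpha)). *)
Definition T_response_I (T : nat -> R -> R) (a : R) (m : nat) (eta : nat -> R)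
           (alpha : R -> R) : Prop :=
  alpha 0 = a /\
  forall k, (1 <= k <= m)%nat ->
    forall t, prev_moment m eta k <= t <= eta k ->
      0 <= alpha t <= alpha (prev_moment m eta k) /\
      t <= T k (alpha t) /\
      (forall x, alpha t < x <= alpha (prev_moment m eta k) -> T k x < t).

(* Main.v *)
Require Import Defs.
From Stdlib Require Import Reals Lra Lia List Classical ClassicalEpsilon FunctionalExtensionality ZArith.
Open Scope R_scope.


Fixpoint Sgen (F : R -> R -> R -> R) (c : R) (l : list (R*R)) : R :=
  match l with nil => 0 | (x,y)::r => F c x y + Sgen F x r end.
Fixpoint chain (P : R -> R -> R -> Prop) (c : R) (l : list (R*R)) : Prop :=
  match l with nil => True | (x,y)::r => P c x y /\ chain P x r end.
Fixpoint endpt (c : R) (l : list (R*R)) : R :=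
  match l with nil => c | (x,_)::r => endpt x r end.

Lemma Sgen_app F c l1 l2 : Sgen F c (l1 ++ l2) = Sgen F c l1 + Sgen F (endpt c l1) l2.
Proof. revert c; induction l1 as [|[x y] r IH]; intros c; simpl; [lra|rewrite IH; lra]. Qed.
Lemma endpt_app c l1 l2 : endpt c (l1 ++ l2) = endpt (endpt c l1) l2.
Proof. revert c; induction l1 as [|[x y] r IH]; intros c; simpl; auto. Qed.
Lemma chain_app P c l1 l2 : chain P c l1 -> chain P (endpt c l1) l2 -> chain P c (l1 ++ l2).
Proof. revert c; induction l1 as [|[x y] r IH]; intros c; simpl; [tauto|]. intros [H1 H2] H3; split; auto. Qed.
Lemma chain_impl (P Q : R -> R -> R -> Prop) c l :
  (forall c x y, P c x y -> Q c x y) -> chain P c l -> chain Q c l.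
Proof. intros H; revert c; induction l as [|[x y] r IH]; intros c; simpl; firstorder. Qed.
Lemma Sgen_le F G c l P : chain P c l -> (forall c x y, P c x y -> F c x y <= G c x y) ->
  Sgen F c l <= Sgen G c l.
Proof. intros Hc H; revert c Hc; induction l as [|[x y] r IH]; intros c Hc; simpl in *; [lra|].
  destruct Hc as [H1 H2]; specialize (H _ _ _ H1); specialize (IH _ H2); lra. Qed.
Lemma Sgen_plus F G c l : Sgen (fun c x y => F c x y + G c x y) c l = Sgen F c l + Sgen G c l.
Proof. revert c; induction l as [|[x y] r IH]; intros c; simpl; [lra|rewrite IH; lra]. Qed.
Lemma Sgen_scal F k c l : Sgen (fun c x y => k * F c x y) c l = k * Sgen F c l.
Proof. revert c; induction l as [|[x y] r IH]; intros c; simpl; [lra|rewrite IH; lra]. Qed.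
Lemma Sgen_ext F G c l P : chain P c l -> (forall c x y, P c x y -> F c x y = G c x y) ->
  Sgen F c l = Sgen G c l.
Proof. intros Hc H; apply Rle_antisym; eapply Sgen_le; eauto; intros; rewrite H; auto; lra. Qed.
Lemma Sgen_tele (g : R -> R) c l : Sgen (fun c x y => g x - g c) c l = g (endpt c l) - g c.
Proof. revert c; induction l as [|[x y] r IH]; intros c; simpl; [lra|rewrite IH; lra]. Qed.

Definition incr (c x y : R) : Prop := c < x.
Lemma chain_bounds P c l : chain P c l -> (forall c x y, P c x y -> c < x) ->
  c <= endpt c l /\ chain (fun c' x y => P c' x y /\ c <= c' /\ x <= endpt c l) c l.
Proof.
  intros Hc HP; revert c Hc; induction l as [|[x y] r IH]; intros c Hc; simpl in *.
  - split; [lra|auto].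
  - destruct Hc as [H1 H2]. specialize (HP _ _ _ H1). destruct (IH _ H2) as [IH1 IH2].
    split; [lra|]. split; [split; [auto|split; lra]|].
    eapply chain_impl; [|exact IH2]. simpl; intros ? ? ? [? [? ?]]; repeat split; auto; lra.
Qed.


Definition Ssum (h g : R -> R) := Sgen (fun c x y => h y * (g x - g c)).
Definition fineP (d s u : R) (c x y : R) : Prop :=
  c < x /\ Rabs (y - c) < d /\ Rabs (y - x) < d /\ s <= y <= u.

Lemma endpt_ge_first c x y r P : chain P c ((x,y)::r) -> (forall c x y, P c x y -> c < x) ->
  x <= endpt c ((x,y)::r).
Proof. intros [H1 H2] HP. simpl. exact (proj1 (chain_bounds _ _ _ H2 HP)). Qed.

Lemma abs_step (a b d S1 S2 e : R) :
  Rabs (a - b) <= e -> d <= 0 ->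
  Rabs ((a * d + S1) - (b * d + S2)) <= e * (- d) + Rabs (S1 - S2).
Proof.
  intros H Hd. replace ((a * d + S1) - (b * d + S2)) with ((a - b) * d + (S1 - S2)) by ring.
  eapply Rle_trans; [apply Rabs_triang|]. rewrite Rabs_mult.
  rewrite (Rabs_left1 d Hd). apply Rplus_le_compat_r. apply Rmult_le_compat_r; lra.
Qed.

Section Compare.
Variables (h g : R -> R) (s u d e : R).
Hypothesis Hunif : forall a b, s <= a <= u -> s <= b <= u -> Rabs (a - b) < 2 * d ->
  Rabs (h a - h b) <= e.
Hypothesis Hmon : forall p q, s <= p -> p <= q -> q <= u -> g q <= g p.
Hypothesis He : 0 <= e.

Lemma fine_lt c x y : fineP d s u c x y -> c < x.
Proof. intros [H _]; exact H. Qed.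

Lemma compare_aux : forall n c l1 l2, (length l1 + length l2 <= n)%nat -> s <= c ->
  chain (fineP d s u) c l1 -> chain (fineP d s u) c l2 ->
  endpt c l1 = u -> endpt c l2 = u ->
  Rabs (Ssum h g c l1 - Ssum h g c l2) <= e * (g c - g u).
Proof.
  induction n as [|n IH]; intros c l1 l2 Hlen Hc C1 C2 E1 E2.
  - destruct l1; [|simpl in Hlen; lia]. destruct l2; [|simpl in Hlen; lia].
    simpl in *. rewrite E1, Rminus_diag, Rabs_R0. lra.
  - destruct l1 as [|[p yp] r1]; destruct l2 as [|[q yq] r2].
    + simpl in *. rewrite E1, Rminus_diag, Rabs_R0. lra.
    + exfalso. simpl in E1. pose proof (endpt_ge_first _ _ _ _ _ C2 fine_lt).
      destruct C2 as [[Hcq _] _]. rewrite E2 in H. lra.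
    + exfalso. simpl in E2. pose proof (endpt_ge_first _ _ _ _ _ C1 fine_lt).
      destruct C1 as [[Hcp _] _]. rewrite E1 in H. lra.
    + pose proof (endpt_ge_first _ _ _ _ _ C1 fine_lt) as Hpu.
      pose proof (endpt_ge_first _ _ _ _ _ C2 fine_lt) as Hqu.
      rewrite E1 in Hpu; rewrite E2 in Hqu.
      destruct C1 as [[Hcp [Hp1 [Hp2 Hp3]]] C1]. destruct C2 as [[Hcq [Hq1 [Hq2 Hq3]]] C2].
      simpl in E1, E2, Hlen. unfold Ssum; simpl; fold (Ssum h g).
      assert (Hyy : Rabs (h yp - h yq) <= e).
      { apply Hunif; try lra. unfold Rabs in *.
        destruct (Rcase_abs (yp - c)); destruct (Rcase_abs (yq - c));
        destruct (Rcase_abs (yp - yq)); lra. }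
      destruct (Rtotal_order p q) as [Hpq|[Hpq|Hpq]].
      * assert (C2' : chain (fineP d s u) p ((q,yq)::r2)).
        { split; [|exact C2]. repeat split; try lra. unfold Rabs in *.
          destruct (Rcase_abs (yq - c)); destruct (Rcase_abs (yq - q));
          destruct (Rcase_abs (yq - p)); lra. }
        assert (IH' := IH p r1 ((q,yq)::r2) ltac:(simpl; lia) ltac:(lra) C1 C2' E1 ltac:(exact E2)).
        unfold Ssum in IH'; simpl in IH'; fold (Ssum h g) in IH'.
        replace (h yq * (g q - g c) + Ssum h g q r2) with
          (h yq * (g p - g c) + (h yq * (g q - g p) + Ssum h g q r2)) by ring.
        eapply Rle_trans; [apply abs_step; [exact Hyy|]|].
        { assert (g p <= g c) by (apply Hmon; lra). lra. }
        assert (g u <= g p) by (apply Hmon; lra). lra.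
      * subst q.
        assert (IH' := IH p r1 r2 ltac:(lia) ltac:(lra) C1 C2 E1 E2).
        eapply Rle_trans; [apply abs_step; [exact Hyy|]|].
        { assert (g p <= g c) by (apply Hmon; lra). lra. }
        assert (g u <= g p) by (apply Hmon; lra). lra.
      * assert (C1' : chain (fineP d s u) q ((p,yp)::r1)).
        { split; [|exact C1]. repeat split; try lra. unfold Rabs in *.
          destruct (Rcase_abs (yp - c)); destruct (Rcase_abs (yp - p));
          destruct (Rcase_abs (yp - q)); lra. }
        assert (IH' := IH q ((p,yp)::r1) r2 ltac:(simpl; lia) ltac:(lra) C1' C2 ltac:(exact E1) E2).
        unfold Ssum in IH'; simpl in IH'; fold (Ssum h g) in IH'.
        replace (h yp * (g p - g c) + Ssum h g p r1) with
          (h yp * (g q - g c) + (h yp * (g p - g q) + Ssum h g p r1)) by ring.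
        eapply Rle_trans; [apply abs_step; [exact Hyy|]|].
        { assert (g q <= g c) by (apply Hmon; lra). lra. }
        assert (g u <= g q) by (apply Hmon; lra). lra.
Qed.
End Compare.


Definition tagP (d : R) (c x y : R) : Prop := c < x /\ c <= y <= x /\ x - c < d.
Definition UC (h : R -> R) (s u : R) : Prop := forall eps, 0 < eps -> exists d, 0 < d /\
  forall a b, s <= a <= u -> s <= b <= u -> Rabs (a - b) < d -> Rabs (h a - h b) < eps.
Definition MonoD (g : R -> R) (s u : R) : Prop := forall p q, s <= p -> p <= q -> q <= u -> g q <= g p.
Definition LRS (h g : R -> R) (s u I : R) : Prop := forall eps, 0 < eps -> exists d, 0 < d /\
  forall l, chain (tagP d) s l -> endpt s l = u -> Rabs (Ssum h g s l - I) < eps.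

Lemma tag_lt d c x y : tagP d c x y -> c < x. Proof. intros [H _]; exact H. Qed.

Lemma tag_to_fine d s u l : chain (tagP d) s l -> endpt s l = u -> chain (fineP d s u) s l.
Proof.
  intros H E. destruct (chain_bounds _ _ _ H (tag_lt d)) as [_ H2]. rewrite E in H2.
  eapply chain_impl; [|exact H2]. intros c x y [[H3 [H4 H5]] [H6 H7]].
  unfold fineP. repeat split; try lra; unfold Rabs; destruct Rcase_abs; lra.
Qed.

Fixpoint uni (c w : R) (n : nat) : list (R*R) :=
  match n with O => nil | S n => (c + w, c) :: uni (c + w) w n end.
Lemma uni_end c w n : endpt c (uni c w n) = c + INR n * w.
Proof. revert c; induction n as [|n IH]; intros c; simpl uni; simpl endpt; [simpl; ring|].
  rewrite IH, S_INR; ring. Qed.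
Lemma uni_chain d c w n : 0 < w < d -> chain (tagP d) c (uni c w n).
Proof. intros Hw; revert c; induction n as [|n IH]; intros c; simpl; auto.
  split; [unfold tagP; repeat split; lra|apply IH]. Qed.

Definition useq (s u : R) (n : nat) : list (R*R) := uni s ((u - s) / INR (S n)) (S n).
Lemma useq_end s u n : endpt s (useq s u n) = u.
Proof. unfold useq; rewrite uni_end. field. apply not_0_INR; lia. Qed.
Lemma useq_small s u d : s < u -> 0 < d -> exists N, forall n, (N <= n)%nat ->
  chain (tagP d) s (useq s u n).
Proof.
  intros Hsu Hd. destruct (archimed ((u - s) / d)) as [H1 _].
  assert (0 <= up ((u - s)/d))%Z.
  { apply le_IZR. assert (0 < (u-s)/d) by (apply Rdiv_lt_0_compat; lra). lra. }
  exists (Z.to_nat (up ((u - s) / d))). intros n Hn. apply uni_chain.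
  assert (Hn' : IZR (up ((u-s)/d)) <= INR n).
  { rewrite <- (Z2Nat.id (up ((u-s)/d))) by lia. rewrite <- INR_IZR_INZ. apply le_INR; auto. }
  assert (0 < INR (S n)) by (apply lt_0_INR; lia).
  split. { apply Rdiv_lt_0_compat; lra. }
  apply (Rmult_lt_reg_r (INR (S n))); auto. unfold Rdiv. rewrite Rmult_assoc, Rinv_l by lra.
  rewrite S_INR. apply (Rmult_lt_reg_r (/ d)). { apply Rinv_0_lt_compat; lra. }
  replace (d * (INR n + 1) * / d) with (INR n + 1) by (field; lra).
  rewrite Rmult_1_r. unfold Rdiv in H1. lra.
Qed.

Section Exist.
Variables (h g : R -> R) (s u : R).
Hypothesis Hsu : s < u.
Hypothesis Huc : UC h s u.
Hypothesis Hmon : MonoD g s u.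

Let V := g s - g u.
Lemma V_nonneg : 0 <= V.
Proof. unfold V. assert (g u <= g s) by (apply Hmon; lra). lra. Qed.

Lemma close_sums : forall eps, 0 < eps -> exists d, 0 < d /\ forall l1 l2,
  chain (tagP d) s l1 -> endpt s l1 = u -> chain (tagP d) s l2 -> endpt s l2 = u ->
  Rabs (Ssum h g s l1 - Ssum h g s l2) < eps.
Proof.
  intros eps He. pose proof V_nonneg as HV.
  set (e' := eps / (V + 1)).
  assert (He' : 0 < e') by (unfold e'; apply Rdiv_lt_0_compat; lra).
  destruct (Huc e' He') as [d0 [Hd0 Hd]].
  exists (d0 / 2). split; [lra|]. intros l1 l2 C1 E1 C2 E2.
  eapply Rle_lt_trans.
  - apply (compare_aux h g s u (d0/2) e' ltac:(intros a b Ha Hb Hab; left; apply Hd; [exact Ha|exact Hb|lra])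
       ltac:(intros p q; apply Hmon) (length l1 + length l2) s l1 l2 (le_n _) (Rle_refl _));
    auto; apply tag_to_fine; auto.
  - fold V. assert (e' * (V + 1) = eps) by (unfold e'; field; lra). nra.
Qed.

Lemma LRS_exists : exists I, LRS h g s u I.
Proof.
  set (a := fun n => Ssum h g s (useq s u n)).
  assert (Hc : Cauchy_crit a).
  { intros eps He. destruct (close_sums eps He) as [d [Hd H]].
    destruct (useq_small s u d Hsu Hd) as [N HN]. exists N. intros n m Hn Hm.
    unfold R_dist, a. apply H; auto using useq_end. }
  destruct (R_complete a Hc) as [I HI]. exists I.
  intros eps He. destruct (close_sums (eps/2) ltac:(lra)) as [d [Hd H]].
  exists d. split; auto. intros l C E.
  destruct (useq_small s u d Hsu Hd) as [N1 HN1].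
  destruct (HI (eps/2) ltac:(lra)) as [N2 HN2].
  specialize (HN1 (max N1 N2) ltac:(lia)). specialize (HN2 (max N1 N2) ltac:(lia)).
  unfold R_dist, a in HN2.
  specialize (H l _ C E HN1 (useq_end s u _)).
  replace (Ssum h g s l - I) with ((Ssum h g s l - Ssum h g s (useq s u (max N1 N2))) +
     (Ssum h g s (useq s u (max N1 N2)) - I)) by ring.
  eapply Rle_lt_trans; [apply Rabs_triang|]. lra.
Qed.
End Exist.

Fixpoint mk (x y : nat -> R) (N : nat) : list (R*R) :=
  match N with O => nil | S n => mk x y n ++ ((x (S n), y n) :: nil) end.
Lemma mk_end x y N : endpt (x O) (mk x y N) = x N.
Proof. induction N as [|N IH]; simpl; auto. rewrite endpt_app, IH. reflexivity. Qed.
Lemma mk_sum h g x y N : Ssum h g (x O) (mk x y N) = RS_sum h g N x y.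
Proof. induction N as [|N IH]; simpl; auto. unfold Ssum in *. rewrite Sgen_app, IH, mk_end.
  simpl. unfold RS_sum. simpl. ring. Qed.
Lemma mk_chain d x y N : (forall i, (i < N)%nat -> x i < x (S i) /\ x i <= y i <= x (S i)) ->
  (forall i, (i < N)%nat -> x (S i) - x i < d) -> chain (tagP d) (x O) (mk x y N).
Proof.
  induction N as [|N IH]; intros H1 H2; simpl; auto. apply chain_app.
  - apply IH; intros; [apply H1|apply H2]; lia.
  - rewrite mk_end. simpl. split; auto. destruct (H1 N ltac:(lia)). specialize (H2 N ltac:(lia)).
    unfold tagP; repeat split; lra.
Qed.

Lemma LRS_is_RS h g s u I : LRS h g s u I -> is_RS_integral h g s u I.
Proof.
  intros H eps He. destruct (H eps He) as [d [Hd H']]. exists d. split; auto.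
  intros N x y [H0 [HN Hi]] Hm. rewrite <- mk_sum, H0. apply H'.
  - rewrite <- H0. apply mk_chain; auto.
  - rewrite <- H0, mk_end. auto.
Qed.

Lemma RS_unique h g s u I1 I2 : s < u -> is_RS_integral h g s u I1 -> is_RS_integral h g s u I2 ->
  I1 = I2.
Proof.
  intros Hsu H1 H2. apply NNPP; intro Hne.
  assert (He : 0 < Rabs (I1 - I2) / 2).
  { assert (I1 - I2 <> 0) by lra. apply Rabs_pos_lt in H. lra. }
  destruct (H1 _ He) as [d1 [Hd1 G1]]. destruct (H2 _ He) as [d2 [Hd2 G2]].
  destruct (useq_small s u (Rmin d1 d2) Hsu ltac:(apply Rmin_pos; auto)) as [N _].
  set (n := S N). set (w := (u - s) / INR n).
  assert (Hn : 0 < INR n) by (apply lt_0_INR; unfold n; lia).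
  destruct (archimed ((u - s) / Rmin d1 d2)) as [Ha _].
  set (M := S (Z.to_nat (up ((u - s) / Rmin d1 d2)))).
  set (x := fun i => s + INR i * ((u - s) / INR M)).
  assert (HM : 0 < INR M) by (apply lt_0_INR; unfold M; lia).
  assert (Hw : (u - s) / INR M < Rmin d1 d2).
  { assert (0 < Rmin d1 d2) by (apply Rmin_pos; auto).
    assert (IZR (up ((u - s) / Rmin d1 d2)) < INR M).
    { unfold M. rewrite S_INR.
      assert (0 <= up ((u - s) / Rmin d1 d2))%Z.
      { apply le_IZR. assert (0 < (u-s)/Rmin d1 d2) by (apply Rdiv_lt_0_compat; lra). lra. }
      rewrite <- (Z2Nat.id (up ((u-s)/Rmin d1 d2))) at 1 by lia. rewrite <- INR_IZR_INZ. lra. }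
    apply (Rmult_lt_reg_r (INR M)); auto. unfold Rdiv. rewrite Rmult_assoc, Rinv_l by lra.
    apply (Rmult_lt_reg_r (/ Rmin d1 d2)). { apply Rinv_0_lt_compat; lra. }
    replace (Rmin d1 d2 * INR M * / Rmin d1 d2) with (INR M) by (field; lra).
    rewrite Rmult_1_r. unfold Rdiv in Ha. lra. }
  assert (TP : tagged_partition s u M x x).
  { unfold x; split; [simpl; ring|split]. { field; lra. }
    intros i Hi. rewrite S_INR. assert (0 < (u - s) / INR M) by (apply Rdiv_lt_0_compat; lra).
    split; nra. }
  assert (Hmesh : forall i, (i < M)%nat -> x (S i) - x i < Rmin d1 d2).
  { intros i _. unfold x. rewrite S_INR. lra. }
  specialize (G1 M x x TP (fun i Hi => Rlt_le_trans _ _ _ (Hmesh i Hi) (Rmin_l _ _))).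
  specialize (G2 M x x TP (fun i Hi => Rlt_le_trans _ _ _ (Hmesh i Hi) (Rmin_r _ _))).
  assert (Rabs (I1 - I2) < Rabs (I1 - I2)); [|lra].
  replace (I1 - I2) with (-(RS_sum h g M x x - I1) + (RS_sum h g M x x - I2)) at 1 by ring.
  eapply Rle_lt_trans; [apply Rabs_triang|]. rewrite Rabs_Ropp. lra.
Qed.

Lemma RS_int_LRS h g s u : s < u -> UC h s u -> MonoD g s u -> LRS h g s u (RS_int h g s u).
Proof.
  intros Hsu Huc Hm. destruct (LRS_exists h g s u Hsu Huc Hm) as [I HI].
  assert (Hex : exists I, is_RS_integral h g s u I) by (exists I; apply LRS_is_RS; auto).
  unfold RS_int. pose proof (epsilon_spec (inhabits 0) _ Hex) as He.
  replace (epsilon (inhabits 0) (is_RS_integral h g s u)) with I; auto.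
  apply RS_unique with h g s u; auto. apply LRS_is_RS; auto.
Qed.

Lemma RS_int_deg h g s : RS_int h g s s = 0.
Proof.
  assert (H : is_RS_integral h g s s 0).
  { intros eps He. exists 1. split; [lra|]. intros N x y [H0 [HN Hi]] _.
    destruct N as [|N]. { unfold RS_sum; simpl. rewrite Rminus_0_r, Rabs_R0; lra. }
    exfalso. assert (forall i, (i <= S N)%nat -> x O <= x i).
    { induction i; intros; [lra|]. destruct (Hi i ltac:(lia)). specialize (IHi ltac:(lia)). lra. }
    specialize (H (S N) (le_n _)). destruct (Hi O ltac:(lia)).
    assert (x O <= x 1%nat) by lra.
    assert (forall i, (1 <= i <= S N)%nat -> x 1%nat <= x i).
    { induction i; intros; [lia|]. destruct (Nat.eq_dec i 0); [subst; lra|].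
      destruct (Hi i ltac:(lia)). specialize (IHi ltac:(lia)). lra. }
    specialize (H4 (S N) ltac:(lia)). lra. }
  unfold RS_int. assert (Hex : exists I, is_RS_integral h g s s I) by (exists 0; auto).
  pose proof (epsilon_spec (inhabits 0) _ Hex) as He. set (I := epsilon _ _) in *.
  apply NNPP; intro Hne. assert (0 < Rabs I) by (apply Rabs_pos_lt; auto).
  destruct (He (Rabs I) H0) as [d [Hd G]].
  specialize (G O (fun _ => s) (fun _ => s)). unfold RS_sum in G; simpl in G.
  assert (Rabs (0 - I) < Rabs I). { apply G; [split; [auto|split; [auto|intros; lia]]|intros; lia]. }
  rewrite Rminus_0_l, Rabs_Ropp in H1; lra.
Qed.


Lemma useq_exists s u d : s < u -> 0 < d -> exists l, chain (tagP d) s l /\ endpt s l = u.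
Proof. intros H1 H2. destruct (useq_small s u d H1 H2) as [N HN].
  exists (useq s u N). split; auto using useq_end. Qed.

Lemma LRS_upper h g s u I K : s < u -> LRS h g s u I ->
  (forall eps, 0 < eps -> exists d, 0 < d /\ forall l, chain (tagP d) s l -> endpt s l = u ->
     Ssum h g s l <= K + eps) -> I <= K.
Proof.
  intros Hsu HL HK. apply Rnot_lt_le; intro Hlt. set (e := (I - K) / 3).
  assert (He : 0 < e) by (unfold e; lra).
  destruct (HL e He) as [d1 [Hd1 G1]]. destruct (HK e He) as [d2 [Hd2 G2]].
  destruct (useq_exists s u (Rmin d1 d2) Hsu (Rmin_pos _ _ Hd1 Hd2)) as [l [Cl El]].
  assert (C1 : chain (tagP d1) s l).
  { eapply chain_impl; [|exact Cl]. intros c x y [? [? ?]]; repeat split; try lra.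
    pose proof (Rmin_l d1 d2); lra. }
  assert (C2 : chain (tagP d2) s l).
  { eapply chain_impl; [|exact Cl]. intros c x y [? [? ?]]; repeat split; try lra.
    pose proof (Rmin_r d1 d2); lra. }
  specialize (G1 l C1 El). specialize (G2 l C2 El).
  apply Rabs_def2 in G1. unfold e in *. lra.
Qed.

Lemma LRS_lower h g s u I K : s < u -> LRS h g s u I ->
  (forall eps, 0 < eps -> exists d, 0 < d /\ forall l, chain (tagP d) s l -> endpt s l = u ->
     K - eps <= Ssum h g s l) -> K <= I.
Proof.
  intros Hsu HL HK. apply Rnot_lt_le; intro Hlt. set (e := (K - I) / 3).
  assert (He : 0 < e) by (unfold e; lra).
  destruct (HL e He) as [d1 [Hd1 G1]]. destruct (HK e He) as [d2 [Hd2 G2]].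
  destruct (useq_exists s u (Rmin d1 d2) Hsu (Rmin_pos _ _ Hd1 Hd2)) as [l [Cl El]].
  assert (C1 : chain (tagP d1) s l).
  { eapply chain_impl; [|exact Cl]. intros c x y [? [? ?]]; repeat split; try lra.
    pose proof (Rmin_l d1 d2); lra. }
  assert (C2 : chain (tagP d2) s l).
  { eapply chain_impl; [|exact Cl]. intros c x y [? [? ?]]; repeat split; try lra.
    pose proof (Rmin_r d1 d2); lra. }
  specialize (G1 l C1 El). specialize (G2 l C2 El).
  apply Rabs_def2 in G1. unfold e in *. lra.
Qed.

Definition inP (s u d : R) (c x y : R) : Prop :=
  c < x /\ c <= y <= x /\ x - c < d /\ s <= c /\ x <= u.
Lemma chain_in s u d l : chain (tagP d) s l -> endpt s l = u -> chain (inP s u d) s l.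
Proof.
  intros H E. destruct (chain_bounds _ _ _ H (tag_lt d)) as [_ H2]. rewrite E in H2.
  eapply chain_impl; [|exact H2]. intros c x y [[? [? ?]] [? ?]]. unfold inP; repeat split; lra.
Qed.

Lemma Sgen_Dg_tele (g : R -> R) s l : Sgen (fun c x y => g c - g x) s l = g s - g (endpt s l).
Proof. revert s; induction l as [|[x y] r IH]; intros s; simpl; [lra|rewrite IH; lra]. Qed.

Lemma Sgen_zero c l : Sgen (fun _ _ _ => 0) c l = 0.
Proof. revert c; induction l as [|[x y] r IH]; intros c; simpl; [lra|rewrite IH; lra]. Qed.

Lemma Rabs_le_inv (a b : R) : Rabs a <= b -> - b <= a <= b.
Proof. unfold Rabs; destruct Rcase_abs; intros; lra. Qed.

Lemma Ssum_abs h g M c l (P : R -> R -> R -> Prop) : chain P c l ->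
  (forall c x y, P c x y -> g x <= g c /\ Rabs (h y) <= M) ->
  Rabs (Ssum h g c l) <= M * (g c - g (endpt c l)).
Proof.
  intros Ci HP. unfold Ssum. revert c Ci. induction l as [|[x y] r IH]; intros c Ci; simpl.
  - rewrite Rabs_R0; lra.
  - destruct Ci as [H1 Ci]. destruct (HP _ _ _ H1) as [Hg Hh].
    eapply Rle_trans; [apply Rabs_triang|]. specialize (IH x Ci).
    rewrite Rabs_mult, (Rabs_left1 (g x - g c)) by lra. assert (0 <= Rabs (h y)) by apply Rabs_pos.
    assert (Rabs (h y) * - (g x - g c) <= M * (g c - g x)) by nra. lra.
Qed.

Section Facts.
Variables (h g : R -> R) (s u : R).
Hypothesis Hsu : s < u.
Hypothesis Huc : UC h s u.
Hypothesis Hmon : MonoD g s u.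

Lemma RS_nonneg : (forall t, s <= t <= u -> h t <= 0) -> 0 <= RS_int h g s u.
Proof.
  intros Hh. apply (LRS_lower h g s u); auto using RS_int_LRS. intros eps He.
  exists 1. split; [lra|]. intros l Cl El.
  assert (0 <= Ssum h g s l); [|lra].
  rewrite <- (Sgen_zero s l). unfold Ssum. eapply Sgen_le; [apply (chain_in s u 1 l Cl El)|].
  intros c x y [? [? [? [? ?]]]]. assert (g x <= g c) by (apply Hmon; lra).
  assert (h y <= 0) by (apply Hh; lra). nra.
Qed.

Lemma RS_bound M : (forall t, s <= t <= u -> Rabs (h t) <= M) ->
  Rabs (RS_int h g s u) <= M * (g s - g u).
Proof.
  intros Hh. assert (HL := RS_int_LRS h g s u Hsu Huc Hmon).
  assert (key : forall l d, chain (tagP d) s l -> endpt s l = u ->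
     Rabs (Ssum h g s l) <= M * (g s - g u)).
  { intros l d Cl El. rewrite <- El. eapply Ssum_abs; [apply (chain_in s u d l Cl El)|].
    intros c x y [? [? [? [? ?]]]]. split; [apply Hmon; lra|apply Hh; lra]. }
  apply Rabs_le. split.
  - apply (LRS_lower h g s u); auto. intros eps He. exists 1; split; [lra|]. intros l Cl El.
    specialize (key l 1 Cl El). apply Rabs_le_inv in key. lra.
  - apply (LRS_upper h g s u); auto. intros eps He. exists 1; split; [lra|]. intros l Cl El.
    specialize (key l 1 Cl El). apply Rabs_le_inv in key. lra.
Qed.
End Facts.

Lemma RS_add h g s m u : s <= m -> m <= u -> UC h s u -> MonoD g s u ->
  RS_int h g s u = RS_int h g s m + RS_int h g m u.
Proof.
  intros Hsm Hmu Huc Hmon.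
  destruct (Req_dec s m) as [<-|Hsm']. { rewrite RS_int_deg; ring. }
  destruct (Req_dec m u) as [->|Hmu']. { rewrite (RS_int_deg h g u); ring. }
  assert (UC h s m) by (intros e He; destruct (Huc e He) as [d [Hd Hx]]; exists d; split; auto;
    intros; apply Hx; auto; lra).
  assert (UC h m u) by (intros e He; destruct (Huc e He) as [d [Hd Hx]]; exists d; split; auto;
    intros; apply Hx; auto; lra).
  assert (MonoD g s m) by (intros p q ? ? ?; apply Hmon; lra).
  assert (MonoD g m u) by (intros p q ? ? ?; apply Hmon; lra).
  pose proof (RS_int_LRS h g s u ltac:(lra) Huc Hmon) as L.
  pose proof (RS_int_LRS h g s m ltac:(lra) ltac:(auto) ltac:(auto)) as L1.
  pose proof (RS_int_LRS h g m u ltac:(lra) ltac:(auto) ltac:(auto)) as L2.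
  set (I := RS_int h g s u) in *. set (I1 := RS_int h g s m) in *. set (I2 := RS_int h g m u) in *.
  apply NNPP; intro Hne. assert (He : 0 < Rabs (I - (I1 + I2)) / 3).
  { assert (I - (I1 + I2) <> 0) by lra. apply Rabs_pos_lt in H3. lra. }
  destruct (L _ He) as [d [Hd G]]. destruct (L1 _ He) as [d1 [Hd1 G1]].
  destruct (L2 _ He) as [d2 [Hd2 G2]].
  set (dd := Rmin d (Rmin d1 d2)).
  assert (Hdd : 0 < dd) by (unfold dd; repeat apply Rmin_pos; auto).
  assert (dd <= d /\ dd <= d1 /\ dd <= d2).
  { unfold dd. pose proof (Rmin_l d (Rmin d1 d2)). pose proof (Rmin_r d (Rmin d1 d2)).
    pose proof (Rmin_l d1 d2). pose proof (Rmin_r d1 d2). lra. }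
  destruct (useq_exists s m dd ltac:(lra) Hdd) as [l1 [C1 E1]].
  destruct (useq_exists m u dd ltac:(lra) Hdd) as [l2 [C2 E2]].
  assert (W : forall d' c l, dd <= d' -> chain (tagP dd) c l -> chain (tagP d') c l).
  { intros d' c l Hd' Cl. eapply chain_impl; [|exact Cl]. intros c0 x y [? [? ?]]; repeat split; lra. }
  specialize (G (l1 ++ l2) (W d _ _ ltac:(lra) (chain_app _ _ _ _ C1 ltac:(rewrite E1; exact C2)))
     ltac:(rewrite endpt_app, E1; auto)).
  specialize (G1 l1 (W d1 _ _ ltac:(lra) C1) E1). specialize (G2 l2 (W d2 _ _ ltac:(lra) C2) E2).
  unfold Ssum in G; rewrite Sgen_app, E1 in G. fold (Ssum h g) in G.
  assert (Rabs (I - (I1 + I2)) < Rabs (I - (I1 + I2))); [|lra].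
  replace (I - (I1 + I2)) with (-(Ssum h g s l1 + Ssum h g m l2 - I) + (Ssum h g s l1 - I1) +
     (Ssum h g m l2 - I2)) at 1 by ring.
  eapply Rle_lt_trans; [apply Rabs_triang|]. eapply Rle_lt_trans; [apply Rplus_le_compat_r; apply Rabs_triang|].
  rewrite Rabs_Ropp. lra.
Qed.


Lemma Rint_eq f a b (pr : Riemann_integrable f a b) : Rint f a b = RiemannInt pr.
Proof.
  unfold Rint. destruct (excluded_middle_informative _) as [H|H].
  - apply RiemannInt_P5.
  - exfalso; apply H; exact (inhabits pr).
Qed.

Definition contab (f : R -> R) (a b : R) := forall x, a <= x <= b -> continuity_pt f x.

Lemma contab_sub f a b a' b' : contab f a b -> a <= a' -> b' <= b -> contab f a' b'.
Proof. intros H ? ? x ?; apply H; lra. Qed.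

Lemma Rint_chasles f a b c : a <= b -> b <= c -> contab f a c -> Rint f a b + Rint f b c = Rint f a c.
Proof.
  intros H1 H2 Hc.
  rewrite (Rint_eq f a b (@continuity_implies_RiemannInt f a b H1 (contab_sub f a c a b Hc (Rle_refl _) H2))).
  rewrite (Rint_eq f b c (@continuity_implies_RiemannInt f b c H2 (contab_sub f a c b c Hc H1 (Rle_refl _)))).
  rewrite (Rint_eq f a c (@continuity_implies_RiemannInt f a c (Rle_trans _ _ _ H1 H2) Hc)).
  apply RiemannInt_P26.
Qed.

Lemma Rint_bnd f a b lo hi : a <= b -> contab f a b -> (forall x, a <= x <= b -> lo <= f x <= hi) ->
  lo * (b - a) <= Rint f a b <= hi * (b - a).
Proof.
  intros H Hc Hb. rewrite (Rint_eq f a b (@continuity_implies_RiemannInt f a b H Hc)).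
  apply RiemannInt_const_bound; auto. intros; apply Hb; lra.
Qed.

Lemma UC_of_cont f a b : contab f a b -> UC f a b.
Proof.
  intros Hc eps He. destruct (@Heine_cor2 f a b Hc (mkposreal eps He)) as [d Hd].
  exists d. split; [apply cond_pos|]. intros. apply Hd; auto.
Qed.

Lemma Rint_tele G g lo hi (P : R -> R -> R -> Prop) : contab G lo hi ->
  (forall c x y, P c x y -> g x <= g c) -> forall l c, chain P c l -> lo <= g (endpt c l) -> g c <= hi ->
  Sgen (fun c x y => Rint G (g x) (g c)) c l = Rint G (g (endpt c l)) (g c) /\ g (endpt c l) <= g c.
Proof.
  intros HG Hg. induction l as [|[x y] r IH]; intros c Cl Hlo Hhi; simpl in *.
  - split; [|lra]. rewrite (Rint_eq G (g c) (g c) (RiemannInt_P7 G (g c))). rewrite RiemannInt_P9. ring.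
  - destruct Cl as [H1 Cl]. pose proof (Hg _ _ _ H1).
    destruct (IH x Cl Hlo ltac:(lra)) as [E Hle]. split; [|lra].
    rewrite E. rewrite Rplus_comm. apply Rint_chasles; auto. apply (contab_sub G lo hi); [exact HG|lra|lra].
Qed.

Section Cmp.
Variables (h g G : R -> R) (s u : R).
Hypothesis Hsu : s < u.
Hypothesis Huc : UC h s u.
Hypothesis Hmon : MonoD g s u.
Hypothesis Hguc : UC g s u.
Hypothesis HG : contab G (g u) (g s).

Let V := g s - g u.
Lemma Vnn : 0 <= V. Proof. unfold V. assert (g u <= g s) by (apply Hmon; lra). lra. Qed.

Lemma tele_chain d l : chain (tagP d) s l -> endpt s l = u ->
  Sgen (fun c x y => Rint G (g x) (g c)) s l = Rint G (g u) (g s).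
Proof.
  intros Cl El. pose proof (chain_in s u d l Cl El) as Ci.
  destruct (Rint_tele G g (g u) (g s) (inP s u d) HG ltac:(intros c x y [? [? [? [? ?]]]]; apply Hmon; lra)
    l s Ci ltac:(rewrite El; lra) ltac:(lra)) as [E _]. rewrite E, El; auto.
Qed.

Lemma Dsum d l : chain (tagP d) s l -> endpt s l = u -> Sgen (fun c x y => g c - g x) s l = V.
Proof. intros _ El. rewrite Sgen_Dg_tele, El; auto. Qed.

Lemma RS_lower_cmp : (forall t, s <= t <= u -> G (g t) <= h t) ->
  Rint G (g u) (g s) <= - RS_int h g s u.
Proof.
  intros Hh. assert (HL := RS_int_LRS h g s u Hsu Huc Hmon).
  cut (RS_int h g s u <= - Rint G (g u) (g s)); [lra|].
  apply (LRS_upper h g s u); auto. intros eps He. pose proof Vnn as HV.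
  set (e' := eps / (V + 1)). assert (He' : 0 < e') by (unfold e'; apply Rdiv_lt_0_compat; lra).
  assert (e' * V <= eps). { assert (e' * (V + 1) = eps) by (unfold e'; field; lra). nra. }
  destruct (UC_of_cont G _ _ HG e' He') as [dG [HdG HGu]].
  destruct (Hguc dG HdG) as [d [Hd Hgd]]. exists d. split; auto. intros l Cl El.
  assert (Ssum h g s l <= Sgen (fun c x y => - Rint G (g x) (g c) + e' * (g c - g x)) s l).
  { unfold Ssum. eapply Sgen_le; [apply (chain_in s u d l Cl El)|].
    intros c x y [Hcx [Hy [Hxd [Hsc Hxu]]]].
    assert (g x <= g y) by (apply Hmon; lra). assert (g y <= g c) by (apply Hmon; lra).
    assert (g x <= g c) by lra.
    assert (Hgd' : Rabs (g c - g x) < dG) by (apply Hgd; try lra; unfold Rabs; destruct Rcase_abs; lra).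
    assert (Hb := Rint_bnd G (g x) (g c) (G (g y) - e') (G (g y) + e') ltac:(lra)
       ltac:(apply (contab_sub G (g u) (g s)); [exact HG| |]; [assert (g u <= g x) by (apply Hmon; lra)|assert (g c <= g s) by (apply Hmon; lra)]; lra)).
    assert (forall z, g x <= z <= g c -> G (g y) - e' <= G z <= G (g y) + e').
    { intros z Hz. assert (Rabs (G z - G (g y)) < e').
      { apply HGu. - assert (g u <= g x) by (apply Hmon; lra). assert (g c <= g s) by (apply Hmon; lra). lra.
        - assert (g u <= g x) by (apply Hmon; lra). assert (g c <= g s) by (apply Hmon; lra). lra.
        - unfold Rabs in *; destruct Rcase_abs; destruct Rcase_abs; lra. }
      apply Rabs_def2 in H3. lra. }
    specialize (Hb H3). assert (G (g y) <= h y) by (apply Hh; lra). nra. }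
  rewrite Sgen_plus, Sgen_scal in H0. unfold Sgen in H0 at 1.
  fold (Sgen (fun c x y => - Rint G (g x) (g c))) in H0.
  replace (Sgen (fun c x y => - Rint G (g x) (g c)) s l) with
    (-1 * Sgen (fun c x y => Rint G (g x) (g c)) s l) in H0.
  2:{ rewrite <- Sgen_scal. apply Sgen_ext with (P := fun _ _ _ => True); [|intros; ring].
      clear; revert s; induction l as [|[] ]; simpl; auto. }
  rewrite (tele_chain d l Cl El), (Dsum d l Cl El) in H0. lra.
Qed.

Lemma RS_upper_cmp : (forall t, s <= t <= u -> g t < g s -> h t <= G (g t)) ->
  - RS_int h g s u <= Rint G (g u) (g s).
Proof.
  intros Hh. assert (HL := RS_int_LRS h g s u Hsu Huc Hmon).
  cut (- Rint G (g u) (g s) <= RS_int h g s u); [lra|].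
  apply (LRS_lower h g s u); auto. intros eps He. pose proof Vnn as HV.
  set (e' := eps / (2 * (V + 1))). assert (He' : 0 < e') by (unfold e'; apply Rdiv_lt_0_compat; lra).
  assert (2 * e' * V <= eps). { assert (2 * e' * (V + 1) = eps) by (unfold e'; field; lra). nra. }
  destruct (UC_of_cont G _ _ HG e' He') as [dG [HdG HGu]].
  destruct (Hguc dG HdG) as [d1 [Hd1 Hgd]]. destruct (Huc e' He') as [d2 [Hd2 Hhd]].
  exists (Rmin d1 d2). split; [apply Rmin_pos; auto|]. intros l Cl El.
  pose proof (Rmin_l d1 d2). pose proof (Rmin_r d1 d2).
  assert (HS : Sgen (fun c x y => - Rint G (g x) (g c) + (-2 * e') * (g c - g x)) s l <= Ssum h g s l).
  { unfold Ssum. eapply Sgen_le; [apply (chain_in s u _ l Cl El)|].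
    intros c x y [Hcx [Hy [Hxd [Hsc Hxu]]]].
    assert (g x <= g y) by (apply Hmon; lra). assert (g y <= g c) by (apply Hmon; lra).
    assert (g u <= g x) by (apply Hmon; lra). assert (g c <= g s) by (apply Hmon; lra).
    assert (Hgd' : Rabs (g c - g x) < dG) by (apply Hgd; try lra; unfold Rabs; destruct Rcase_abs; lra).
    assert (Hb := Rint_bnd G (g x) (g c) (G (g x) - e') (G (g x) + e') ltac:(lra)
       ltac:(apply (contab_sub G (g u) (g s)); [exact HG|lra|lra])).
    assert (HZ : forall z, g x <= z <= g c -> G (g x) - e' <= G z <= G (g x) + e').
    { intros z Hz. assert (HH : Rabs (G z - G (g x)) < e').
      { apply HGu; try lra. unfold Rabs in *; destruct Rcase_abs; destruct Rcase_abs; lra. }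
      apply Rabs_def2 in HH. lra. }
    specialize (Hb HZ).
    destruct (Req_dec (g x) (g c)) as [Eq|Neq].
    - rewrite Eq in *. replace (g c - g c) with 0 in * by ring. nra.
    - assert (h x <= G (g x)) by (apply Hh; lra).
      assert (HH : Rabs (h y - h x) < e') by (apply Hhd; try lra; unfold Rabs; destruct Rcase_abs; lra).
      apply Rabs_def2 in HH. nra. }
  rewrite Sgen_plus, Sgen_scal in HS.
  replace (Sgen (fun c x y => - Rint G (g x) (g c)) s l) with
    (-1 * Sgen (fun c x y => Rint G (g x) (g c)) s l) in HS.
  2:{ rewrite <- Sgen_scal. apply Sgen_ext with (P := fun _ _ _ => True); [|intros; ring].
      clear; revert s; induction l as [|[] ]; simpl; auto. }
  rewrite (tele_chain _ l Cl El), (Dsum _ l Cl El) in HS. lra.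
Qed.
End Cmp.


Lemma lim_intro f D l x0 : (forall eps, 0 < eps -> exists alp, 0 < alp /\
   forall x, D x -> Rabs (x - x0) < alp -> Rabs (f x - l) < eps) -> limit1_in f D l x0.
Proof. intros H eps He. destruct (H eps He) as [a [Ha H']]. exists a. split; auto.
  intros x [Hx Hd]. simpl in *. unfold R_dist in *. auto. Qed.
Lemma lim_elim f D l x0 : limit1_in f D l x0 -> forall eps, 0 < eps -> exists alp, 0 < alp /\
   forall x, D x -> Rabs (x - x0) < alp -> Rabs (f x - l) < eps.
Proof. intros H eps He. destruct (H eps He) as [a [Ha H']]. exists a. split; [exact Ha|].
  intros x Hx Hd. apply (H' x). split; auto. Qed.

Lemma lim_unique f D l l' x0 : (forall alp, 0 < alp -> exists x, D x /\ Rabs (x - x0) < alp) ->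
  limit1_in f D l x0 -> limit1_in f D l' x0 -> l = l'.
Proof. intros Ha H1 H2. apply (single_limit f D l l' x0); [|exact H1|exact H2].
  intros alp Hal. destruct (Ha alp Hal) as [x [Hx Hd]]. exists x. split; auto. Qed.

Lemma Rint_nonpos f a b : a <= b -> contab f a b -> (forall z, a <= z <= b -> f z <= 0) -> Rint f a b <= 0.
Proof.
  intros H Hc Hf. rewrite (Rint_eq f a b (@continuity_implies_RiemannInt f a b H Hc)).
  rewrite <- (Rmult_0_l (b - a)). rewrite <- (RiemannInt_P15 (RiemannInt_P14 a b 0)).
  apply RiemannInt_P19; auto. intros; unfold fct_cte; apply Hf; lra.
Qed.

Section ExpInt.
Variable g : R -> R.
Variable x : R.
Hypothesis Hx : 0 < x.
Hypothesis Hg : forall z, 0 < z <= x -> continuity_pt g z /\ g z <= 0.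

Let val := fun e => exp (Rint g e x).
Let D := fun e => 0 < e <= x.

Lemma adh_D : forall alp, 0 < alp -> exists e, D e /\ Rabs (e - 0) < alp.
Proof. intros alp Ha. exists (Rmin x (alp/2)). unfold D. pose proof (Rmin_l x (alp/2)).
  pose proof (Rmin_r x (alp/2)). assert (0 < Rmin x (alp/2)) by (apply Rmin_pos; lra).
  split; [lra|]. rewrite Rminus_0_r, Rabs_pos_eq; lra. Qed.

Lemma contab_g e e' : 0 < e -> e' <= x -> contab g e e'.
Proof. intros H1 H2 z Hz. apply Hg. lra. Qed.

Lemma val_mono e1 e2 : 0 < e1 -> e1 <= e2 -> e2 <= x -> val e1 <= val e2.
Proof.
  intros H1 H2 H3. unfold val.
  rewrite <- (Rint_chasles g e1 e2 x H2 H3 (contab_g e1 x H1 (Rle_refl _))).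
  assert (Rint g e1 e2 <= 0) by (apply Rint_nonpos; auto; [apply contab_g; lra|intros; apply Hg; lra]).
  destruct (Rle_lt_or_eq_dec _ _ H) as [Hl|He]; [left; apply exp_increasing; lra|rewrite He, Rplus_0_l; lra].
Qed.

Lemma val_pos e : 0 < val e. Proof. apply exp_pos. Qed.

Lemma expint_lim : exists l, limit1_in val D l 0.
Proof.
  set (S := fun v => exists e, D e /\ v = - val e).
  assert (Hb : bound S). { exists 0. intros v [e [_ ->]]. pose proof (val_pos e). lra. }
  assert (Hne : exists v, S v). { exists (- val x). exists x. split; auto. unfold D; lra. }
  destruct (completeness S Hb Hne) as [M [HM1 HM2]].
  exists (- M). apply lim_intro. intros eps He.
  assert (exists e0, D e0 /\ M - eps < - val e0).
  { apply NNPP; intro Hn. assert (M <= M - eps); [|lra]. apply HM2. intros v [e [He0 ->]].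
    apply Rnot_lt_le; intro. apply Hn. exists e; auto. }
  destruct H as [e0 [[He0 He0'] Hv]]. exists e0. split; [lra|]. intros e [Ha Hb'] Hd.
  rewrite Rminus_0_r, Rabs_pos_eq in Hd by lra.
  assert (- val e <= M) by (apply HM1; exists e; split; auto; split; lra).
  assert (val e <= val e0) by (apply val_mono; lra).
  rewrite Rabs_pos_eq by lra. lra.
Qed.

Lemma expint_spec : limit1_in val D (exp_int0 g x) 0.
Proof.
  unfold exp_int0. destruct expint_lim as [l Hl].
  apply (epsilon_spec (inhabits 0) (fun l => limit1_in (fun e => exp (Rint g e x)) (fun e => 0 < e <= x) l 0)).
  exists l; exact Hl.
Qed.
End ExpInt.

Lemma expint_ratio g x y : 0 < y -> y <= x ->
  (forall z, 0 < z <= x -> continuity_pt g z /\ g z <= 0) ->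
  exp_int0 g x = exp_int0 g y * exp (Rint g y x).
Proof.
  intros Hy Hyx Hg.
  assert (Hgy : forall z, 0 < z <= y -> continuity_pt g z /\ g z <= 0) by (intros; apply Hg; lra).
  pose proof (expint_spec g x ltac:(lra) Hg) as Lx. pose proof (expint_spec g y Hy Hgy) as Ly.
  set (c := exp (Rint g y x)). assert (Hc : 0 < c) by apply exp_pos.
  apply (lim_unique (fun e => exp (Rint g e x)) (fun e => 0 < e <= x) _ _ 0); auto.
  { apply adh_D; lra. }
  apply lim_intro. intros eps He. apply lim_elim with (eps := eps / c) in Ly;
    [|apply Rdiv_lt_0_compat; auto].
  destruct Ly as [a [Ha Ly]]. exists (Rmin a y). split; [apply Rmin_pos; auto|].
  intros e [He1 He2] Hd. pose proof (Rmin_l a y). pose proof (Rmin_r a y).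
  rewrite Rminus_0_r, Rabs_pos_eq in Hd by lra.
  assert (Hcont : contab g e x) by (intros z Hz; apply Hg; lra).
  rewrite <- (Rint_chasles g e y x ltac:(lra) Hyx Hcont), exp_plus. fold c.
  specialize (Ly e ltac:(lra) ltac:(rewrite Rminus_0_r, Rabs_pos_eq; lra)).
  replace (exp (Rint g e y) * c - exp_int0 g y * c) with ((exp (Rint g e y) - exp_int0 g y) * c) by ring.
  rewrite Rabs_mult, (Rabs_pos_eq c) by lra.
  apply (Rmult_lt_compat_r c) in Ly; auto. unfold Rdiv in Ly. rewrite Rmult_assoc, Rinv_l in Ly by lra. lra.
Qed.



Definition CW (f : R -> R) (a b t : R) := forall eps, 0 < eps -> exists d, 0 < d /\
  forall s, a <= s <= b -> Rabs (s - t) < d -> Rabs (f s - f t) < eps.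

Lemma cont_intro f t : (forall eps, 0 < eps -> exists d, 0 < d /\
  forall s, Rabs (s - t) < d -> Rabs (f s - f t) < eps) -> continuity_pt f t.
Proof. intros H eps He. destruct (H eps He) as [d [Hd H']]. exists d. split; auto.
  intros s [_ Hs]. simpl in *. unfold R_dist in *. auto. Qed.
Lemma cont_elim f t : continuity_pt f t -> forall eps, 0 < eps -> exists d, 0 < d /\
  forall s, Rabs (s - t) < d -> Rabs (f s - f t) < eps.
Proof. intros H eps He. destruct (H eps He) as [d [Hd H']]. exists d. split; [exact Hd|].
  intros s Hs. destruct (Req_dec s t) as [->|Hne]. { rewrite Rminus_diag, Rabs_R0; auto. }
  apply (H' s). split; auto. split; [exact I|auto]. Qed.

Lemma CW_of_cont f a b t : continuity_pt f t -> CW f a b t.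
Proof. intros H eps He. destruct (cont_elim f t H eps He) as [d [Hd H']]. exists d; split; auto. Qed.

Lemma cont_of_CW f a b t : a < t < b -> CW f a b t -> continuity_pt f t.
Proof.
  intros Ht H. apply cont_intro. intros eps He. destruct (H eps He) as [d [Hd H']].
  exists (Rmin d (Rmin (t - a) (b - t))). split; [repeat apply Rmin_pos; lra|].
  intros s Hs. pose proof (Rmin_l d (Rmin (t - a) (b - t))). pose proof (Rmin_r d (Rmin (t - a) (b - t))).
  pose proof (Rmin_l (t - a) (b - t)). pose proof (Rmin_r (t - a) (b - t)).
  apply Rabs_def2 in Hs. apply H'; [lra|]. apply Rabs_def1; lra.
Qed.

Lemma CW_comp k f a b t : CW f a b t -> continuity_pt k (f t) -> CW (fun s => k (f s)) a b t.
Proof.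
  intros Hf Hk eps He. destruct (cont_elim k (f t) Hk eps He) as [d1 [Hd1 H1]].
  destruct (Hf d1 Hd1) as [d2 [Hd2 H2]]. exists d2. split; [exact Hd2|]. intros. apply H1, H2; auto.
Qed.

Lemma CW_sub f a b a' b' t : CW f a b t -> a <= a' -> b' <= b -> CW f a' b' t.
Proof. intros H ? ? eps He. destruct (H eps He) as [d [Hd H']]. exists d; split; auto.
  intros; apply H'; auto; lra. Qed.

Lemma clamp_prop a b s : a <= b -> a <= Rmax a (Rmin b s) <= b.
Proof. intros; unfold Rmax, Rmin; repeat destruct Rle_dec; lra. Qed.
Lemma clamp_id a b s : a <= s <= b -> Rmax a (Rmin b s) = s.
Proof. intros; unfold Rmax, Rmin; repeat destruct Rle_dec; lra. Qed.
Lemma clamp_lip a b s t : a <= b -> a <= t <= b -> Rabs (Rmax a (Rmin b s) - t) <= Rabs (s - t).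
Proof. intros; unfold Rmax, Rmin, Rabs; repeat destruct Rle_dec; repeat destruct Rcase_abs; lra. Qed.

Lemma UC_of_within f a b : a <= b -> (forall t, a <= t <= b -> CW f a b t) -> UC f a b.
Proof.
  intros Hab H. set (fc := fun s => f (Rmax a (Rmin b s))).
  assert (Hc : contab fc a b).
  { intros t Ht. apply cont_intro. intros eps He. destruct (H t Ht eps He) as [d [Hd H']].
    exists d. split; auto. intros s Hs. unfold fc. rewrite (clamp_id a b t Ht).
    apply H'; [apply clamp_prop; auto|]. eapply Rle_lt_trans; [apply clamp_lip; auto|auto]. }
  intros eps He. destruct (UC_of_cont fc a b Hc eps He) as [d [Hd H']]. exists d; split; auto.
  intros x y Hx Hy Hxy. specialize (H' x y Hx Hy Hxy). unfold fc in H'.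
  rewrite (clamp_id a b x Hx), (clamp_id a b y Hy) in H'. auto.
Qed.

Lemma deriv_CW P t l : 0 <= t <= 1 -> deriv_within01 P t l -> CW P 0 1 t.
Proof.
  intros Ht H eps He. destruct (lim_elim _ _ _ _ H 1 ltac:(lra)) as [al [Hal H']].
  set (K := Rabs l + 1). assert (HK : 0 < K) by (unfold K; pose proof (Rabs_pos l); lra).
  exists (Rmin al (eps / K)). split; [apply Rmin_pos; auto; apply Rdiv_lt_0_compat; auto|].
  intros s Hs Hd. pose proof (Rmin_l al (eps / K)). pose proof (Rmin_r al (eps / K)).
  destruct (Req_dec s t) as [->|Hne]. { rewrite Rminus_diag, Rabs_R0; auto. }
  specialize (H' s ltac:(split; auto) ltac:(lra)).
  assert (Hq : Rabs ((P s - P t) / (s - t)) <= K).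
  { unfold K. replace ((P s - P t) / (s - t)) with (((P s - P t) / (s - t) - l) + l) by ring.
    eapply Rle_trans; [apply Rabs_triang|]. lra. }
  replace (P s - P t) with ((P s - P t) / (s - t) * (s - t)) by (field; lra).
  rewrite Rabs_mult. assert (0 < Rabs (s - t)) by (apply Rabs_pos_lt; lra).
  apply Rle_lt_trans with (K * Rabs (s - t)); [apply Rmult_le_compat_r; lra|].
  assert (Rabs (s - t) < eps / K) by lra.
  apply (Rmult_lt_compat_l K) in H3; auto. unfold Rdiv in H3.
  rewrite <- Rmult_assoc, (Rmult_comm K eps), Rmult_assoc, Rinv_r in H3 by lra. lra.
Qed.

Section Eff.
Variable P : R -> R.
Hypothesis HP : effectiveness P.

Lemma P0 : P 0 = 0. Proof. apply HP. Qed.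
Lemma P1' : P 1 = 1. Proof. apply HP. Qed.
Lemma Plt1 t : 0 <= t < 1 -> P t < 1. Proof. apply HP. Qed.
Lemma Prange t : 0 <= t <= 1 -> 0 <= P t <= 1. Proof. apply HP. Qed.
Lemma Pstrict s t : 0 <= s -> s < t -> t <= 1 -> P s < P t. Proof. apply HP. Qed.
Lemma Pmono s t : 0 <= s -> s <= t -> t <= 1 -> P s <= P t.
Proof. intros. destruct (Req_dec s t) as [->|]; [lra|]. left; apply Pstrict; lra. Qed.
Lemma PCW t : 0 <= t <= 1 -> CW P 0 1 t.
Proof. intros Ht. destruct HP as [_ [_ [_ [_ [_ [dP [H _]]]]]]]. eapply deriv_CW; eauto. Qed.
Lemma Pcont t : 0 < t < 1 -> continuity_pt P t.
Proof. intros Ht. apply (cont_of_CW P 0 1); auto. apply PCW; lra. Qed.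
Lemma Ppos t : 0 < t <= 1 -> 0 < P t.
Proof. intros. rewrite <- P0. apply Pstrict; lra. Qed.
End Eff.

Lemma ln_cont y : 0 < y -> continuity_pt ln y.
Proof. intros H. apply derivable_continuous_pt. exists (/ y). apply derivable_pt_lim_ln; auto. Qed.

Lemma lnq_CW P t a b : effectiveness P -> 0 <= a -> b < 1 -> a <= t <= b -> CW (lnq P) a b t.
Proof.
  intros HP Ha Hb Ht. unfold lnq. apply (CW_comp ln (fun s => 1 - P s)).
  - intros eps He. destruct (PCW P HP t ltac:(lra) eps He) as [d [Hd H]]. exists d; split; auto.
    intros s Hs Hd'. replace (1 - P s - (1 - P t)) with (- (P s - P t)) by ring.
    rewrite Rabs_Ropp. apply H; auto; lra.
  - apply ln_cont. pose proof (Plt1 P HP t ltac:(lra)). lra.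
Qed.

Lemma lnq_UC P a b : effectiveness P -> 0 <= a -> a <= b -> b < 1 -> UC (lnq P) a b.
Proof. intros. apply UC_of_within; auto. intros; apply lnq_CW; auto. Qed.

Lemma lnq_nonpos P t : effectiveness P -> 0 <= t <= 1 -> lnq P t <= 0.
Proof.
  intros HP Ht. unfold lnq. destruct (Rle_lt_dec t 1) as [_|]; [|lra].
  destruct (Req_dec t 1) as [->|Hne].
  - rewrite P1' by auto. rewrite Rminus_diag. unfold ln. destruct (Rlt_dec 0 0) as [hh|hh]; [exfalso; exact (Rlt_irrefl 0 hh)|apply Rle_refl].
  - pose proof (Plt1 P HP t ltac:(lra)). pose proof (Prange P HP t Ht).
    rewrite <- ln_1. destruct (Req_dec (P t) 0) as [E|].
    + rewrite E, Rminus_0_r; lra.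
    + left. apply ln_increasing; lra.
Qed.

Section TT.
Variable Tk : R -> R.
Hypothesis T0 : Tk 0 = 1.
Hypothesis Tlim : limit1_in Tk (fun x => 0 <= x) (Tk 0) 0.
Hypothesis Trange : forall x, 0 < x -> 0 < Tk x <= 1.
Variable dT : R -> R.
Hypothesis Tder : forall x, 0 < x -> derivable_pt_lim Tk x (dT x) /\ dT x < 0.

Lemma Tcont x : 0 < x -> continuity_pt Tk x.
Proof. intros H. apply derivable_continuous_pt. exists (dT x). apply Tder; auto. Qed.

Lemma Tstrict_pos x1 x2 : 0 < x1 -> x1 < x2 -> Tk x2 < Tk x1.
Proof.
  intros H1 H2. destruct (MVT_cor2 Tk dT x1 x2 H2 ltac:(intros c Hc; apply Tder; lra)) as [c [E Hc]].
  destruct (Tder c ltac:(lra)) as [_ Hn]. assert (dT c * (x2 - x1) < 0).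
  { assert (0 < x2 - x1) by lra. nra. } lra.
Qed.

Lemma Tlt1 x : 0 < x -> Tk x < 1.
Proof. intros H. pose proof (Tstrict_pos (x/2) x ltac:(lra) ltac:(lra)).
  pose proof (Trange (x/2) ltac:(lra)). lra. Qed.

Lemma Tstrict x1 x2 : 0 <= x1 -> x1 < x2 -> Tk x2 < Tk x1.
Proof. intros H1 H2. destruct (Req_dec x1 0) as [->|]. { rewrite T0. apply Tlt1; auto. }
  apply Tstrict_pos; lra. Qed.

Lemma Tmono x1 x2 : 0 <= x1 -> x1 <= x2 -> Tk x2 <= Tk x1.
Proof. intros. destruct (Req_dec x1 x2) as [->|]; [lra|]. left; apply Tstrict; lra. Qed.

Lemma Tle1 x : 0 <= x -> Tk x <= 1.
Proof. intros. rewrite <- T0. apply Tmono; lra. Qed.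
Lemma Tpos x : 0 <= x -> 0 < Tk x.
Proof. intros. destruct (Req_dec x 0) as [->|]; [lra|]. apply Trange; lra. Qed.

Lemma TCW x b : 0 <= x -> CW Tk 0 b x.
Proof.
  intros Hx. destruct (Req_dec x 0) as [->|Hne].
  - intros eps He. destruct (lim_elim _ _ _ _ Tlim eps He) as [d [Hd H]]. exists d; split; auto.
    intros s Hs Hd'. apply H; lra.
  - apply CW_of_cont, Tcont; lra.
Qed.
End TT.

Lemma gk_cont P Tk z : effectiveness P -> 0 < z -> (forall x, 0 < x -> continuity_pt Tk x) ->
  (forall x, 0 < x -> 0 < Tk x < 1) -> continuity_pt (fun z => ln (1 - P (Tk z))) z.
Proof.
  intros HP Hz Hc Hr. apply (continuity_pt_comp (fun z => 1 - P (Tk z)) ln).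
  - apply (continuity_pt_minus (fun _ => 1) (fun z => P (Tk z))); [apply continuity_pt_const; intros ? ?; auto|].
    apply (continuity_pt_comp Tk P); auto. apply Pcont; auto.
  - apply ln_cont. pose proof (Plt1 P HP (Tk z)). specialize (Hr z Hz). pose proof (H ltac:(lra)). lra.
Qed.


Lemma mono_lim_1 (F : R -> R) : (forall u1 u2, 0 <= u1 -> u1 <= u2 -> u2 < 1 -> F u2 <= F u1) ->
  (forall u, 0 <= u < 1 -> 0 <= F u) ->
  exists L, limit1_in F (fun u => 0 <= u < 1) L 1 /\ (forall u, 0 <= u < 1 -> L <= F u) /\
    (forall eps, 0 < eps -> exists u, 0 <= u < 1 /\ F u < L + eps).
Proof.
  intros Hm Hp. set (S := fun v => exists u, (0 <= u < 1) /\ v = - F u).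
  assert (Hb : bound S). { exists 0. intros v [u [Hu ->]]. pose proof (Hp u Hu). lra. }
  assert (Hne : exists v, S v). { exists (- F 0). exists 0. split; auto. lra. }
  destruct (completeness S Hb Hne) as [M [HM1 HM2]].
  assert (Hlow : forall u, 0 <= u < 1 -> - M <= F u).
  { intros u Hu. assert (- F u <= M) by (apply HM1; exists u; auto). lra. }
  assert (Happ : forall eps, 0 < eps -> exists u, 0 <= u < 1 /\ F u < - M + eps).
  { intros eps He. apply NNPP; intro Hn. assert (M <= M - eps); [|lra]. apply HM2.
    intros v [u [Hu ->]]. apply Rnot_lt_le; intro. apply Hn. exists u. split; auto. lra. }
  exists (- M). split; [|split; auto].
  apply lim_intro. intros eps He. destruct (Happ eps He) as [u0 [Hu0 Hf]].
  exists (1 - u0). split; [lra|]. intros u Hu Hd. apply Rabs_def2 in Hd.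
  assert (F u <= F u0) by (apply Hm; lra). pose proof (Hlow u Hu).
  rewrite Rabs_pos_eq; lra.
Qed.

Definition FF (P1 beta : R -> R) (u : R) := exp (- RS_int (lnq P1) beta 0 u).

Lemma FF_mono P1 beta u1 u2 : effectiveness P1 -> MonoD beta 0 1 -> 0 <= u1 -> u1 <= u2 -> u2 < 1 ->
  FF P1 beta u2 <= FF P1 beta u1.
Proof.
  intros HP Hm H1 H2 H3. unfold FF.
  rewrite (RS_add (lnq P1) beta 0 u1 u2); auto.
  2:{ apply lnq_UC; auto; lra. }
  2:{ intros p q ? ? ?; apply Hm; lra. }
  destruct (Req_dec u1 u2) as [<-|Hne]. { rewrite RS_int_deg, Rplus_0_r; lra. }
  assert (0 <= RS_int (lnq P1) beta u1 u2).
  { apply RS_nonneg; [lra|apply lnq_UC; auto; lra|intros p q ? ? ?; apply Hm; lra|].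
    intros; apply lnq_nonpos; auto; lra. }
  destruct (Rle_lt_or_eq_dec _ _ H) as [Hl|He]; [left; apply exp_increasing; lra|rewrite <- He; right; f_equal; ring].
Qed.

Lemma phi_lt1 P1 beta t : t < 1 -> phi P1 beta t = 1 - FF P1 beta t.
Proof. intros H. unfold phi, FF. destruct (Rlt_dec t 1); [auto|lra]. Qed.

Lemma phi_one P1 beta : effectiveness P1 -> MonoD beta 0 1 ->
  exists L, phi P1 beta 1 = 1 - L /\ (forall u, 0 <= u < 1 -> L <= FF P1 beta u) /\
    (forall eps, 0 < eps -> exists u, 0 <= u < 1 /\ FF P1 beta u < L + eps).
Proof.
  intros HP Hm. destruct (mono_lim_1 (FF P1 beta)) as [L [HL [H1 H2]]].
  - intros; apply FF_mono; auto.
  - intros; left; apply exp_pos.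
  - exists L. split; auto. unfold phi. destruct (Rlt_dec 1 1) as [|_]; [lra|]. f_equal.
    symmetry. apply (lim_unique (fun u => exp (- RS_int (lnq P1) beta 0 u)) (fun u => 0 <= u < 1) _ _ 1).
    + intros alp Ha. exists (Rmax 0 (1 - alp/2)). split.
      * unfold Rmax; destruct Rle_dec; lra.
      * unfold Rmax; destruct Rle_dec; rewrite Rabs_left; lra.
    + exact HL.
    + apply (epsilon_spec (inhabits 0) (fun l => limit1_in (fun u => exp (- RS_int (lnq P1) beta 0 u)) (fun u => 0 <= u < 1) l 1)).
      exists L; exact HL.
Qed.


Lemma RS_const h g s u : s <= u -> UC h s u -> (forall t, s <= t <= u -> g t = g s) -> RS_int h g s u = 0.
Proof.
  intros Hsu Huc Hc. destruct (Req_dec s u) as [->|Hne]; [apply RS_int_deg|].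
  assert (Hm : MonoD g s u) by (intros p q ? ? ?; rewrite (Hc p), (Hc q); lra).
  assert (HL := RS_int_LRS h g s u ltac:(lra) Huc Hm).
  assert (key : forall d l, chain (tagP d) s l -> endpt s l = u -> Ssum h g s l = 0).
  { intros d l Cl El. rewrite <- (Sgen_zero s l). unfold Ssum.
    apply Sgen_ext with (P := inP s u d); [apply chain_in; auto|].
    intros c x y [? [? [? [? ?]]]]. rewrite (Hc x), (Hc c) by lra. ring. }
  apply Rle_antisym.
  - apply (LRS_upper h g s u); auto; [lra|]. intros eps He; exists 1; split; [lra|].
    intros l Cl El; rewrite (key 1 l Cl El); lra.
  - apply (LRS_lower h g s u); auto; [lra|]. intros eps He; exists 1; split; [lra|].
    intros l Cl El; rewrite (key 1 l Cl El); lra.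
Qed.

Lemma clamp_lip2 a b s t : a <= b -> Rabs (Rmax a (Rmin b s) - Rmax a (Rmin b t)) <= Rabs (s - t).
Proof. intros; unfold Rmax, Rmin, Rabs; repeat destruct Rle_dec; repeat destruct Rcase_abs; lra. Qed.

Lemma cont_clamp f a b : a <= b -> (forall t, a <= t <= b -> CW f a b t) ->
  continuity (fun s => f (Rmax a (Rmin b s))).
Proof.
  intros Hab H s. apply cont_intro. intros eps He.
  destruct (H _ (clamp_prop a b s Hab) eps He) as [d [Hd H']]. exists d. split; auto.
  intros s' Hs'. apply H'; [apply clamp_prop; auto|]. eapply Rle_lt_trans; [apply clamp_lip2; auto|auto].
Qed.

Lemma IVT_val f a b c : a <= b -> (forall t, a <= t <= b -> CW f a b t) -> f b <= c <= f a ->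
  exists v, a <= v <= b /\ f v = c.
Proof.
  intros Hab H Hc. set (fc := fun s => f (Rmax a (Rmin b s)) - c).
  assert (Hcont : continuity fc).
  { unfold fc. apply continuity_minus; [apply cont_clamp; auto|apply continuity_const; intros ? ?; auto]. }
  destruct (IVT_cor fc a b Hcont Hab) as [v [Hv Hfv]].
  { unfold fc. rewrite (clamp_id a b a), (clamp_id a b b) by lra. nra. }
  exists v. split; auto. unfold fc in Hfv. rewrite (clamp_id a b v Hv) in Hfv. lra.
Qed.

Lemma UC_ext f g s u : (forall t, s <= t <= u -> f t = g t) -> UC f s u -> UC g s u.
Proof. intros He H eps Heps. destruct (H eps Heps) as [d [Hd H']]. exists d; split; auto.
  intros. rewrite <- !He by auto. auto. Qed.

Lemma UC_shift al p e : p <= e -> UC al p e -> UC (fun t => al (Rmax p t)) 0 e.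
Proof.
  intros Hpe H eps Heps. destruct (H eps Heps) as [d [Hd H']]. exists d; split; auto.
  intros x y Hx Hy Hxy. apply H'.
  - unfold Rmax; destruct Rle_dec; lra.
  - unfold Rmax; destruct Rle_dec; lra.
  - eapply Rle_lt_trans; [|exact Hxy]. unfold Rmax, Rabs; repeat destruct Rle_dec; repeat destruct Rcase_abs; lra.
Qed.

Lemma freeze_max al p t : 0 <= t -> freeze al p t = al (Rmax p t).
Proof. intros. unfold freeze, Rmax. destruct (Rlt_dec t p); destruct (Rle_dec p t); f_equal; lra. Qed.

Lemma UC_sub f s u s' u' : UC f s u -> s <= s' -> u' <= u -> UC f s' u'.
Proof. intros H ? ? eps Heps. destruct (H eps Heps) as [d [Hd H']]. exists d; split; auto.
  intros; apply H'; auto; lra. Qed.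

Lemma game_alg A1 A2 f P Pi' : A1 * f - A2 * (1 - f) * P + (1 - P) * (1 - f) * ((A1 + A2) * Pi' - A2)
  = A1 - (A1 + A2) * (1 - f) * (1 - (1 - P) * Pi').
Proof. ring. Qed.

Lemma ln_le' x y : 0 < x -> x <= y -> ln x <= ln y.
Proof. intros. destruct (Req_dec x y) as [->|]; [lra|]. left; apply ln_increasing; lra. Qed.
Lemma exp_le' x y : x <= y -> exp x <= exp y.
Proof. intros. destruct (Req_dec x y) as [->|]; [lra|]. left; apply exp_increasing; lra. Qed.

Lemma CW_comp_w k f a b c d t : CW f a b t -> (forall s, a <= s <= b -> c <= f s <= d) ->
  a <= t <= b -> CW k c d (f t) -> CW (fun s => k (f s)) a b t.
Proof.
  intros Hf Hr Ht Hk eps He. destruct (Hk eps He) as [d1 [Hd1 H1]].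
  destruct (Hf d1 Hd1) as [d2 [Hd2 H2]]. exists d2. split; [exact Hd2|]. intros s Hs Hd.
  apply H1; auto.
Qed.


Section Game.
Variables (P1 P2 : R -> R) (A1 A2 a : R) (m : nat) (T : nat -> R -> R).
Hypothesis HP1 : effectiveness P1.
Hypothesis HP2 : effectiveness P2.
Hypothesis HA1 : 0 < A1.
Hypothesis HA2 : 0 < A2.
Hypothesis Ha : 0 < a.
Hypothesis HT : class_T T.
Hypothesis Hyp : forall (x : R) (k : nat), 0 < x <= a -> (1 <= k <= m)%nat ->
     exp_int0 (fun al => ln (1 - P1 (T k al))) x + prodR k (fun i => 1 - P2 (T i x)) = 1.

Definition gk (k : nat) := fun z => ln (1 - P1 (T k z)).
Definition Pi (k : nat) (x : R) := prodR k (fun i => 1 - P2 (T i x)).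
Definition W (k : nat) (x : R) := (A1 + A2) * Pi k x - A2.

Section K.
Variable k : nat.
Hypothesis Hk : (1 <= k)%nat.
Lemma T0' : T k 0 = 1. Proof. apply (HT k Hk). Qed.
Lemma Tlim' : limit1_in (T k) (fun x => 0 <= x) (T k 0) 0. Proof. apply (HT k Hk). Qed.
Lemma Trange' x : 0 < x -> 0 < T k x <= 1. Proof. apply (HT k Hk). Qed.
Lemma Tder' : exists dT, forall x, 0 < x -> derivable_pt_lim (T k) x (dT x) /\ dT x < 0.
Proof. destruct (HT k Hk) as [_ [_ [_ [_ [dT H]]]]]. exists dT. intros x Hx. destruct (H x Hx); tauto. Qed.
Lemma Tnext' x : 0 <= x -> T (S k) x <= T k x.
Proof. intros Hx. destruct (Req_dec x 0) as [->|].
  - rewrite T0', (proj1 (HT (S k) ltac:(lia))). lra.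
  - left. apply (HT k Hk). lra. Qed.
Lemma Tstrict' x1 x2 : 0 <= x1 -> x1 < x2 -> T k x2 < T k x1.
Proof. destruct Tder' as [dT H]. apply (Tstrict (T k) T0' Trange' dT H). Qed.
Lemma Tmono' x1 x2 : 0 <= x1 -> x1 <= x2 -> T k x2 <= T k x1.
Proof. destruct Tder' as [dT H]. apply (Tmono (T k) T0' Trange' dT H). Qed.
Lemma Tle1' x : 0 <= x -> T k x <= 1.
Proof. destruct Tder' as [dT H]. apply (Tle1 (T k) T0' Trange' dT H). Qed.
Lemma Tpos' x : 0 <= x -> 0 < T k x.
Proof. destruct Tder' as [dT H]. apply (Tpos (T k) T0' Trange'). Qed.
Lemma Tlt1' x : 0 < x -> T k x < 1.
Proof. destruct Tder' as [dT H]. apply (Tlt1 (T k) Trange' dT H). Qed.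
Lemma TCW' x b : 0 <= x -> CW (T k) 0 b x.
Proof. destruct Tder' as [dT H]. apply (TCW (T k) Tlim' dT H). Qed.
Lemma Tcont' x : 0 < x -> continuity_pt (T k) x.
Proof. destruct Tder' as [dT H]. apply (Tcont (T k) dT H). Qed.
Lemma gk_contab y x : 0 < y -> contab (gk k) y x.
Proof. intros Hy z Hz. unfold gk. apply gk_cont; auto; [lra|apply Tcont'|].
  intros; split; [apply Tpos'; lra|apply Tlt1'; lra]. Qed.
Lemma gk_nonpos z : 0 <= z -> gk k z <= 0.
Proof. intros. unfold gk. apply (lnq_nonpos P1 (T k z)); auto. split; [left; apply Tpos'; lra|apply Tle1'; lra]. Qed.
End K.

Lemma Pi_range k x : 0 <= x -> 0 <= Pi k x <= 1.
Proof.
  intros Hx. unfold Pi. induction k as [|k IH]; simpl; [lra|].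
  assert (0 <= P2 (T (S k) x) <= 1).
  { apply Prange; auto. split; [left; apply (Tpos' (S k)); [lia|lra]|apply (Tle1' (S k)); [lia|lra]]. }
  split; [apply Rmult_le_pos; lra|]. nra.
Qed.

Lemma Pi_S k x : Pi (S k) x = Pi k x * (1 - P2 (T (S k) x)). Proof. reflexivity. Qed.

Lemma Pi_factor k x : (1 <= k)%nat -> 0 <= x -> Pi k x <= 1 - P2 (T k x).
Proof.
  intros Hk Hx. destruct k as [|k]; [lia|]. rewrite Pi_S.
  pose proof (Pi_range k x Hx). assert (0 <= P2 (T (S k) x) <= 1).
  { apply Prange; auto. split; [left; apply (Tpos' (S k)); [lia|lra]|apply (Tle1' (S k)); [lia|lra]]. }
  rewrite <- (Rmult_1_l (1 - P2 (T (S k) x))) at 2. apply Rmult_le_compat_r; lra.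
Qed.

Lemma Pi_zero k : (1 <= k)%nat -> Pi k 0 = 0.
Proof.
  intros Hk. destruct k as [|k]; [lia|]. rewrite Pi_S, T0' by lia. rewrite P1' by auto. ring.
Qed.

Lemma Pi_lt1 k x : (1 <= k)%nat -> 0 < x -> Pi k x < 1.
Proof.
  intros Hk Hx. pose proof (Pi_factor k x Hk ltac:(lra)).
  assert (0 < P2 (T k x)) by (apply Ppos; auto; split; [apply Tpos'; auto; lra|apply Tle1'; auto; lra]).
  lra.
Qed.

Lemma Pi_small k : (1 <= k)%nat -> forall d, 0 < d -> exists z0, 0 < z0 /\
  forall z, 0 <= z <= z0 -> Pi k z < d.
Proof.
  intros Hk d Hd. destruct (PCW P2 HP2 1 ltac:(lra) d Hd) as [d1 [Hd1 H1]].
  destruct (TCW' k Hk 0 1 ltac:(lra) d1 Hd1) as [d2 [Hd2 H2]].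
  exists (Rmin 1 (d2 / 2)). split; [apply Rmin_pos; lra|]. intros z Hz.
  pose proof (Rmin_l 1 (d2/2)). pose proof (Rmin_r 1 (d2/2)).
  pose proof (Pi_factor k z Hk ltac:(lra)).
  specialize (H2 z ltac:(lra) ltac:(rewrite Rminus_0_r, Rabs_pos_eq; lra)).
  rewrite T0' in H2 by auto.
  assert (0 < T k z <= 1) by (split; [apply Tpos'; auto; lra|apply Tle1'; auto; lra]).
  specialize (H1 (T k z) ltac:(lra) H2). rewrite P1' in H1 by auto.
  apply Rabs_def2 in H1. lra.
Qed.

Lemma E_ratio k x y : (1 <= k <= m)%nat -> 0 < y -> y <= x -> x <= a ->
  1 - Pi k x = (1 - Pi k y) * exp (Rint (gk k) y x).
Proof.
  intros Hk Hy Hyx Hxa.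
  assert (Ex := Hyp x k ltac:(lra) Hk). assert (Ey := Hyp y k ltac:(lra) Hk).
  unfold Pi. replace (1 - prodR k (fun i => 1 - P2 (T i x))) with (exp_int0 (gk k) x) by (unfold gk; lra).
  replace (1 - prodR k (fun i => 1 - P2 (T i y))) with (exp_int0 (gk k) y) by (unfold gk; lra).
  apply expint_ratio; auto. intros z Hz. split.
  - apply (gk_contab k ltac:(lia) z z); lra.
  - apply gk_nonpos; lia || lra.
Qed.

Lemma CW_of_UC f s u t : s <= t <= u -> UC f s u -> CW f s u t.
Proof. intros Ht H eps He. destruct (H eps He) as [d [Hd H']]. exists d; split; [exact Hd|].
  intros; apply H'; auto. Qed.

Section Part1.
Variables (al : R -> R) (eta : nat -> R).
Hypothesis Hal : consumption_fn a al.
Hypothesis Heta : T_response_II T m al eta.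

Let p j := prev_moment m eta j.

Lemma al0 : al 0 = a. Proof. apply Hal. Qed.
Lemma al_mono s t : 0 <= s -> s <= t -> t <= 1 -> al t <= al s. Proof. apply Hal. Qed.
Lemma al_nn t : 0 <= t <= 1 -> 0 <= al t. Proof. apply Hal. Qed.
Lemma al_le_a t : 0 <= t <= 1 -> al t <= a. Proof. intros. rewrite <- al0. apply al_mono; lra. Qed.
Lemma al_CW t : 0 <= t <= 1 -> CW al 0 1 t.
Proof. intros Ht. destruct Hal as [_ [_ [_ [Hc _]]]]. specialize (Hc t Ht).
  intros eps He. destruct (lim_elim _ _ _ _ Hc eps He) as [d [Hd H]]. exists d; split; auto. Qed.
Lemma al_UC : UC al 0 1. Proof. apply UC_of_within; [lra|]. exact al_CW. Qed.

Lemma p_S j : (j < m)%nat -> p j = eta (S j).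
Proof. intros. unfold p, prev_moment. destruct (Nat.eqb_spec j m); [lia|auto]. Qed.
Lemma p_m : p m = 0. Proof. unfold p, prev_moment. rewrite Nat.eqb_refl. auto. Qed.

Lemma resp j : (1 <= j <= m)%nat -> 0 <= p j <= 1 -> p j <= T j (al (p j)) ->
  (p j <= eta j <= 1) /\ T j (al (eta j)) = eta j.
Proof.
  intros Hj Hp Hinv. destruct (Heta j Hj) as [H1 [H2 H3]].
  change (prev_moment m eta j) with (p j) in *.
  assert (He1 : eta j <= 1).
  { apply Rnot_lt_le; intro Hlt. specialize (H3 1 ltac:(lra)).
    pose proof (Tle1' j ltac:(lia) (al 1) (al_nn 1 ltac:(lra))). lra. }
  split; [lra|]. apply Rle_antisym; auto.
  destruct (Req_dec (p j) (eta j)) as [Eq|Ne].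
  { rewrite <- Eq. auto. }
  apply Rnot_lt_le; intro Hlt. set (e := eta j) in *. set (d0 := e - T j (al e)).
  assert (Hcw : CW (fun s => T j (al s)) 0 1 e).
  { apply (CW_comp_w (T j) al 0 1 0 a); [apply al_CW; lra| |lra|apply TCW'; [lia|apply al_nn; lra]].
    intros s Hs; split; [apply al_nn; auto|apply al_le_a; auto]. }
  destruct (Hcw (d0/2) ltac:(unfold d0; lra)) as [d [Hd Hc]].
  pose proof (Rmin_l d d0). pose proof (Rmin_r d d0).
  assert (0 < Rmin d d0) by (apply Rmin_pos; unfold d0; lra).
  set (r := Rmin d d0) in *.
  set (s := Rmax (p j) (e - r / 2)).
  assert (Hs : p j <= s < e /\ e - r/2 <= s).
  { unfold s, Rmax. destruct Rle_dec; lra. }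
  specialize (H3 s ltac:(split; lra)). specialize (Hc s ltac:(split; lra) ltac:(rewrite Rabs_left; lra)).
  apply Rabs_def2 in Hc. unfold d0 in *. lra.
Qed.

Lemma claim1 : forall j, (j <= m)%nat -> forall beta, (forall t, 0 <= t -> beta t = freeze al (p j) t) ->
  0 <= p j <= 1 -> ((1 <= j)%nat -> p j <= T j (al (p j))) ->
  Kpay P1 P2 A1 A2 j eta beta <= W j (al (p j)).
Proof.
  induction j as [|j IH]; intros Hjm beta Hb Hp Hinv.
  - simpl. unfold W, Pi; simpl. destruct (Rlt_dec 0 (beta 0)); lra.
  - destruct (resp (S j) ltac:(lia) Hp (Hinv ltac:(lia))) as [[Hpe He1] HTe].
    set (e := eta (S j)) in *. set (pp := p (S j)) in *.
    set (x := al pp). set (y := al e).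
    assert (Hpj : p j = e) by (apply p_S; lia).
    assert (Hbm : forall t, 0 <= t -> beta t = al (Rmax pp t)) by (intros; rewrite Hb, freeze_max; auto).
    assert (Hb' : forall t, 0 <= t -> freeze beta e t = freeze al (p j) t).
    { intros t Ht. rewrite Hpj, !freeze_max by auto. rewrite Hbm.
      - f_equal. unfold Rmax; repeat destruct Rle_dec; lra.
      - unfold Rmax; repeat destruct Rle_dec; lra. }
    assert (HIH : Kpay P1 P2 A1 A2 j eta (freeze beta e) <= W j y).
    { replace y with (al (p j)) by (rewrite Hpj; auto). apply IH; auto; [lia|rewrite Hpj; split; lra|].
      intros Hj1. rewrite Hpj. rewrite <- HTe at 1. apply Tnext'; auto. apply al_nn; lra. }
    assert (Hb0 : beta 0 = x) by (rewrite Hbm by lra; unfold x; f_equal; unfold Rmax; repeat destruct Rle_dec; lra).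
    assert (Hbe : beta e = y) by (rewrite Hbm by lra; unfold y; f_equal; unfold Rmax; repeat destruct Rle_dec; lra).
    assert (Hmono : MonoD beta 0 1).
    { intros p' q H1 H2 H3. rewrite !Hbm by lra. apply al_mono; unfold Rmax; repeat destruct Rle_dec; lra. }
    assert (HUC : UC beta 0 1).
    { apply (UC_ext (fun t => al (Rmax pp t))); [intros; rewrite Hbm; auto; lra|].
      apply UC_shift; [lra|]. apply (UC_sub al 0 1); [exact al_UC|lra|lra]. }
    assert (Hrange : forall t, 0 <= t <= 1 -> 0 <= beta t <= x).
    { intros t Ht. rewrite Hbm by lra. unfold x. split; [apply al_nn; unfold Rmax; repeat destruct Rle_dec; split; lra|].
      apply (al_mono pp (Rmax pp t)); unfold Rmax; repeat destruct Rle_dec; lra. }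
    assert (HTb : forall t, 0 <= t <= e -> t <= T (S j) (beta t) /\ (t < e -> t < T (S j) (beta t))).
    { intros t Ht. destruct (Heta (S j) ltac:(lia)) as [_ [_ H3]].
      change (prev_moment m eta (S j)) with pp in H3. change (eta (S j)) with e in H3.
      destruct (Rlt_dec t pp) as [Hlt|Hge].
      - rewrite Hbm by lra. replace (Rmax pp t) with pp by (unfold Rmax; repeat destruct Rle_dec; lra).
        specialize (Hinv ltac:(lia)). split; [lra|intros; lra].
      - apply Rnot_lt_le in Hge. rewrite Hbm by lra. replace (Rmax pp t) with t by (unfold Rmax; repeat destruct Rle_dec; lra).
        destruct (Rle_lt_or_eq_dec t e (proj2 Ht)) as [Hne| Heqe].
        + specialize (H3 t ltac:(split; lra)). split; [lra|auto].
        + rewrite Heqe. split; [rewrite HTe; lra|intros; lra]. }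
    assert (Hxa : x <= a) by (apply al_le_a; split; lra).
    assert (Hyx : y <= x) by (apply al_mono; lra).
    assert (Hy0 : 0 <= y) by (apply al_nn; split; lra).
    assert (HPe : 0 <= P2 e <= 1) by (apply Prange; auto; lra).
    cbn [Kpay]. fold e.
    assert (Hln : forall t, 0 <= t <= e -> 0 < beta t -> gk (S j) (beta t) <= lnq P1 t).
    { intros t Ht Hpos. unfold gk, lnq. destruct (HTb t Ht) as [HT1 _].
      assert (T (S j) (beta t) < 1) by (apply Tlt1'; [lia|auto]).
      apply ln_le'. { pose proof (Plt1 P1 HP1 (T (S j) (beta t)) ltac:(split; [left; apply Tpos'; [lia|lra]|lra])). lra. }
      assert (P1 t <= P1 (T (S j) (beta t))) by (apply Pmono; auto; lra). lra. }
    destruct (Rle_lt_or_eq_dec 0 y Hy0) as [Hypos|Hyz].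
    +
      assert (He1' : e < 1) by (rewrite <- HTe; apply Tlt1'; [lia|auto]).
      assert (He0 : 0 < e) by (rewrite <- HTe; apply Tpos'; [lia|exact Hy0]).
      rewrite (phi_lt1 P1 beta e He1'). set (FFe := FF P1 beta e).
      assert (HFF : exp (Rint (gk (S j)) y x) <= FFe).
      { unfold FFe, FF. apply exp_le'. rewrite <- Hb0, <- Hbe.
        apply RS_lower_cmp; auto.
        - apply lnq_UC; auto; lra.
        - intros p' q ? ? ?; apply Hmono; lra.
        - apply (UC_sub beta 0 1); auto; lra.
        - rewrite Hb0, Hbe. apply gk_contab; [lia|auto].
        - intros t Ht. apply Hln; auto. assert (beta e <= beta t) by (apply Hmono; lra). lra. }
      assert (Hrat := E_ratio (S j) x y ltac:(lia) Hypos Hyx Hxa).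
      assert (HPiy : Pi (S j) y = Pi j y * (1 - P2 e)) by (rewrite Pi_S; unfold y; rewrite HTe; auto).
      pose proof (Pi_range (S j) y Hy0). pose proof (Pi_range j y Hy0).
      assert (HFpos : 0 < FFe) by apply exp_pos.
      replace (1 - (1 - FFe)) with FFe by ring.
      assert ((1 - P2 e) * FFe * Kpay P1 P2 A1 A2 j eta (freeze beta e) <= (1 - P2 e) * FFe * W j y).
      { apply Rmult_le_compat_l; auto. apply Rmult_le_pos; lra. }
      eapply Rle_trans; [apply Rplus_le_compat_l; exact H1|].
      unfold W. set (E := exp (Rint (gk (S j)) y x)) in *.
      assert (L1 : A1 * (1 - FFe) - A2 * FFe * P2 e + (1 - P2 e) * FFe * ((A1 + A2) * Pi j y - A2)
        = A1 - (A1 + A2) * FFe * (1 - Pi (S j) y)) by (rewrite HPiy; ring).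
      assert (L2 : (A1 + A2) * Pi (S j) x - A2 = A1 - (A1 + A2) * ((1 - Pi (S j) y) * E)) by (rewrite <- Hrat; ring).
      rewrite L1, L2. assert (0 <= 1 - Pi (S j) y) by lra.
      assert (E * (1 - Pi (S j) y) <= FFe * (1 - Pi (S j) y)) by (apply Rmult_le_compat_r; auto).
      nra.
    +
      assert (He : e = 1).
      { rewrite <- HTe. replace (al e) with 0 by (unfold y in Hyz; lra). apply T0'; lia. }
      assert (HP2e : P2 e = 1) by (rewrite He; apply P1'; auto).
      rewrite HP2e. replace (1 - 1) with 0 by ring.
      destruct (phi_one P1 beta HP1 Hmono) as [L [HL [HL1 HL2]]]. rewrite He, HL.
      set (B := 1 - Pi (S j) x).
      assert (Hx0 : 0 <= x) by lra.
      pose proof (Pi_range (S j) x Hx0) as HPix.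
      assert (HTb1 : forall t, 0 <= t < 1 -> t < T (S j) (beta t)).
      { intros t Ht. destruct (HTb t ltac:(split; lra)) as [_ H2]. apply H2; lra. }
      assert (Hpos : forall u, 0 < u < 1 -> 0 < beta u -> B <= FF P1 beta u).
      { intros u Hu Hbu.
        assert (HFF : exp (Rint (gk (S j)) (beta u) x) <= FF P1 beta u).
        { unfold FF. apply exp_le'. rewrite <- Hb0.
          apply RS_lower_cmp; [lra| | | | |].
          - apply lnq_UC; auto; lra.
          - intros p' q ? ? ?; apply Hmono; lra.
          - apply (UC_sub beta 0 1); auto; lra.
          - rewrite Hb0. apply gk_contab; [lia|auto].
          - intros t Ht. apply Hln; [lra|]. assert (beta u <= beta t) by (apply Hmono; lra). lra. }
        assert (Hbx : beta u <= x) by (apply Hrange; lra).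
        assert (Hrat := E_ratio (S j) x (beta u) ltac:(lia) Hbu Hbx Hxa).
        pose proof (Pi_range (S j) (beta u) ltac:(lra)).
        assert (0 < exp (Rint (gk (S j)) (beta u) x)) by apply exp_pos.
        unfold B. rewrite Hrat. nra. }
      assert (HLB : forall u, 0 <= u < 1 -> B <= FF P1 beta u).
      { intros u Hu. destruct (Rle_lt_or_eq_dec 0 u (proj1 Hu)) as [Hu0|Hu0].
        2:{ subst u. unfold FF. rewrite RS_int_deg, Ropp_0, exp_0. unfold B; lra. }
        destruct (Rle_lt_or_eq_dec 0 (beta u) (proj1 (Hrange u ltac:(split; lra)))) as [Hbu|Hbu].
        { apply Hpos; auto; lra. }
        destruct (Rle_lt_or_eq_dec 0 x Hx0) as [Hxp|Hxz].
        2:{ unfold FF. rewrite RS_const; [rewrite Ropp_0, exp_0; unfold B; lra|lra|apply lnq_UC; auto; lra|].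
            intros t Ht. pose proof (Hrange t ltac:(split; lra)). pose proof (Hrange 0 ltac:(split; lra)). lra. }
        apply Rnot_lt_le; intro Hlt.
        set (M := - lnq P1 u).
        assert (HM : forall t, 0 <= t <= u -> Rabs (lnq P1 t) <= M).
        { intros t Ht. pose proof (lnq_nonpos P1 t HP1 ltac:(split; lra)).
          assert (lnq P1 u <= lnq P1 t).
          { unfold lnq. apply ln_le'. { pose proof (Plt1 P1 HP1 u ltac:(split; lra)). lra. }
            assert (P1 t <= P1 u) by (apply Pmono; auto; lra). lra. }
          rewrite Rabs_left1 by lra. unfold M. lra. }
        assert (HM0 : 0 <= M) by (pose proof (HM 0 ltac:(split; lra)); pose proof (Rabs_pos (lnq P1 0)); lra).
        assert (HB0 : 0 <= B) by (unfold B; lra).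
        set (c := Rmin (x/2) ((B - FF P1 beta u) / (2 * (B * M + 1)))).
        assert (Hc1 : 0 < c).
        { unfold c. apply Rmin_pos; [lra|]. apply Rdiv_lt_0_compat; [lra|]. nra. }
        assert (Hc2 : c <= x/2) by (unfold c; apply Rmin_l).
        assert (Hc3 : c * (2 * (B * M + 1)) <= B - FF P1 beta u).
        { assert (Hcc : c <= (B - FF P1 beta u) / (2 * (B * M + 1))) by (unfold c; apply Rmin_r).
          assert (0 < 2 * (B * M + 1)) by nra.
          apply (Rmult_le_compat_r (2 * (B * M + 1))) in Hcc; [|lra].
          unfold Rdiv in Hcc. rewrite Rmult_assoc, Rinv_l in Hcc by lra. lra. }
        destruct (IVT_val beta 0 u c ltac:(lra)) as [v [Hv Hbv]].
        { intros t Ht. apply CW_of_UC; auto. apply (UC_sub beta 0 1); auto; lra. }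
        { rewrite Hb0. lra. }
        assert (Hv0 : 0 < v).
        { destruct (Rle_lt_or_eq_dec 0 v (proj1 Hv)) as [|Hv0]; auto. subst v. rewrite Hb0 in Hbv. lra. }
        assert (Hvu : v < u).
        { destruct (Rle_lt_or_eq_dec v u (proj2 Hv)) as [|Hvu]; auto. subst v. lra. }
        pose proof (Hpos v ltac:(split; lra) ltac:(lra)) as HFv.
        assert (Hadd : RS_int (lnq P1) beta 0 u = RS_int (lnq P1) beta 0 v + RS_int (lnq P1) beta v u).
        { apply RS_add; [lra|lra|apply lnq_UC; auto; lra|intros p' q ? ? ?; apply Hmono; lra]. }
        assert (Hbd : Rabs (RS_int (lnq P1) beta v u) <= M * (beta v - beta u)).
        { apply RS_bound; [lra|apply lnq_UC; auto; lra|intros p' q ? ? ?; apply Hmono; lra|].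
          intros t Ht; apply HM; lra. }
        rewrite Hbv, <- Hbu in Hbd. apply Rabs_le_inv in Hbd.
        assert (HFu : FF P1 beta u = FF P1 beta v * exp (- RS_int (lnq P1) beta v u)).
        { unfold FF. rewrite Hadd, <- exp_plus. f_equal; ring. }
        assert (Hexp : 1 - M * c <= exp (- RS_int (lnq P1) beta v u)).
        { eapply Rle_trans; [|apply exp_ineq1_le]. lra. }
        assert (0 < exp (- RS_int (lnq P1) beta v u)) by apply exp_pos.
        assert (B * (1 - M * c) <= FF P1 beta u).
        { rewrite HFu. apply Rle_trans with (B * exp (- RS_int (lnq P1) beta v u)).
          - apply Rmult_le_compat_l; auto.
          - apply Rmult_le_compat_r; lra. }
        assert (B * M * c <= (B - FF P1 beta u) / 2).
        { assert (B * M * c <= c * (B * M + 1)) by nra. lra. }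
        nra. }
      assert (HBL : B <= L).
      { apply Rnot_lt_le; intro Hlt. destruct (HL2 (B - L) ltac:(lra)) as [u [Hu Hfu]].
        pose proof (HLB u Hu). lra. }
      unfold W. unfold B in HBL. nra.
Qed.
End Part1.

Lemma Tc_cont k : (1 <= k)%nat -> continuity (fun z => T k (Rmax 0 z)).
Proof.
  intros Hk z. apply cont_intro. intros eps He.
  destruct (TCW' k Hk (Rmax 0 z) (Rmax 0 z + 1) ltac:(unfold Rmax; repeat destruct Rle_dec; lra) eps He) as [d [Hd H]].
  exists (Rmin d 1). split; [apply Rmin_pos; lra|]. intros s Hs.
  pose proof (Rmin_l d 1). pose proof (Rmin_r d 1).
  assert (Habs : Rabs (Rmax 0 s - Rmax 0 z) <= Rabs (s - z)).
  { unfold Rmax, Rabs; repeat destruct Rle_dec; repeat destruct Rcase_abs; lra. }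
  apply H.
  - split; [unfold Rmax; repeat destruct Rle_dec; lra|]. apply Rabs_def2 in Hs.
    unfold Rmax in *; repeat destruct Rle_dec; lra.
  - lra.
Qed.

Section Part2.
Variables (eta : nat -> R) (al : R -> R).
Hypothesis Ham : action_moments m eta.
Hypothesis Hres : T_response_I T a m eta al.

Let p j := prev_moment m eta j.

Lemma p2_S j : (j < m)%nat -> p j = eta (S j).
Proof. intros. unfold p, prev_moment. destruct (Nat.eqb_spec j m); [lia|auto]. Qed.
Lemma p2_m : p m = 0. Proof. unfold p, prev_moment. rewrite Nat.eqb_refl. auto. Qed.

Lemma eta_rng k : (1 <= k <= m)%nat -> 0 <= eta k <= 1. Proof. apply Ham. Qed.
Lemma p_nonneg j : (j <= m)%nat -> 0 <= p j.
Proof. intros. destruct (Nat.eq_dec j m) as [->|]; [rewrite p2_m; lra|].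
  rewrite p2_S by lia. apply eta_rng; lia. Qed.
Lemma p_le_eta k : (1 <= k <= m)%nat -> 0 <= p k <= eta k.
Proof.
  intros Hk. destruct (Nat.eq_dec k m) as [->|Hne].
  - rewrite p2_m. pose proof (eta_rng m Hk). lra.
  - rewrite p2_S by lia. pose proof (eta_rng (S k) ltac:(lia)).
    destruct Ham as [_ H2]. pose proof (H2 k ltac:(lia) ltac:(lia)). lra.
Qed.

Section Period.
Variable k : nat.
Hypothesis Hk : (1 <= k <= m)%nat.
Let P := p k.
Let e := eta k.
Let cap := al P.

Lemma per t : P <= t <= e -> 0 <= al t <= cap /\ t <= T k (al t) /\
  (forall z, al t < z <= cap -> T k z < t).
Proof. intros Ht. destruct Hres as [_ H]. apply (H k Hk t Ht). Qed.

Lemma per_mono t1 t2 : P <= t1 -> t1 <= t2 -> t2 <= e -> al t2 <= al t1.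
Proof.
  intros H1 H2 H3. apply Rnot_lt_le; intro Hlt.
  destruct (per t1 ltac:(split; lra)) as [_ [_ Hz]]. destruct (per t2 ltac:(split; lra)) as [[_ Hc2] [HT2 _]].
  specialize (Hz (al t2) ltac:(split; lra)). lra.
Qed.

Lemma per_eq t : P <= t <= e -> al t < cap -> T k (al t) <= t.
Proof.
  intros Ht Hlt. destruct (per t Ht) as [[H0 _] [_ Hz]]. apply Rnot_lt_le; intro Hgt.
  destruct (TCW' k ltac:(lia) (al t) cap H0 (T k (al t) - t) ltac:(lra)) as [d [Hd Hc]].
  pose proof (Rmin_l cap (al t + d/2)). pose proof (Rmin_r cap (al t + d/2)).
  set (z := Rmin cap (al t + d/2)) in *.
  assert (al t < z) by (unfold z, Rmin; destruct Rle_dec; lra).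
  specialize (Hz z ltac:(split; lra)).
  specialize (Hc z ltac:(split; lra) ltac:(rewrite Rabs_pos_eq; lra)).
  apply Rabs_def2 in Hc. lra.
Qed.

Lemma per_pos t : P <= t <= e -> t < 1 -> 0 < cap -> 0 < al t.
Proof.
  intros Ht Ht1 Hcap. destruct (per t Ht) as [[H0 _] [_ Hz]].
  destruct (Rle_lt_or_eq_dec 0 (al t) H0) as [|Hz0]; auto. exfalso.
  destruct (TCW' k ltac:(lia) 0 cap ltac:(lra) (1 - t) ltac:(lra)) as [d [Hd Hc]].
  rewrite T0' in Hc by lia.
  pose proof (Rmin_l cap (d/2)). pose proof (Rmin_r cap (d/2)).
  assert (0 < Rmin cap (d/2)) by (apply Rmin_pos; lra).
  set (z := Rmin cap (d/2)) in *.
  specialize (Hz z ltac:(split; lra)).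
  specialize (Hc z ltac:(split; lra) ltac:(rewrite Rminus_0_r, Rabs_pos_eq; lra)).
  apply Rabs_def2 in Hc. lra.
Qed.

Lemma per_UC : UC al P e.
Proof.
  intros eps He. destruct (Rlt_le_dec cap eps) as [Hbig|Hsm].
  - exists 1. split; [lra|]. intros t1 t2 H1 H2 _.
    destruct (per t1 H1) as [[? ?] _]. destruct (per t2 H2) as [[? ?] _].
    apply Rabs_def1; lra.
  - set (phi0 := fun z => T k (Rmax 0 z) - T k (Rmax 0 (z + eps))).
    assert (Hcont : forall z, 0 <= z <= cap - eps -> continuity_pt phi0 z).
    { intros z _. unfold phi0. apply continuity_pt_minus; [apply Tc_cont; lia|].
      apply (continuity_pt_comp (fun z => z + eps) (fun z => T k (Rmax 0 z))).
      - apply continuity_pt_plus; [apply derivable_continuous_pt, derivable_pt_id|apply continuity_pt_const; intros ? ?; auto].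
      - apply Tc_cont; lia. }
    destruct (continuity_ab_min phi0 0 (cap - eps) ltac:(lra) Hcont) as [zs [Hmin Hzs]].
    set (mm := phi0 zs).
    assert (Hmm : 0 < mm).
    { unfold mm, phi0. rewrite !(Rmax_right 0) by lra.
      pose proof (Tstrict' k ltac:(lia) zs (zs + eps) ltac:(lra) ltac:(lra)). lra. }
    exists mm. split; auto.
    assert (key : forall t1 t2, P <= t1 <= e -> P <= t2 <= e -> t1 <= t2 -> t2 - t1 < mm ->
      al t1 - al t2 < eps).
    { intros t1 t2 H1 H2 H12 Hd. apply Rnot_le_lt; intro Hge.
      destruct (per t1 H1) as [[? ?] [HT1 _]]. destruct (per t2 H2) as [[? ?] _].
      assert (HT2 : T k (al t2) <= t2) by (apply per_eq; auto; lra).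
      assert (T k (al t1) <= T k (al t2 + eps)) by (apply Tmono'; lia || lra).
      specialize (Hmin (al t2) ltac:(split; lra)).
      assert (phi0 (al t2) = T k (al t2) - T k (al t2 + eps)) by (unfold phi0; rewrite !(Rmax_right 0) by lra; auto).
      change (phi0 zs) with mm in Hmin. lra. }
    intros t1 t2 H1 H2 Hd. destruct (Rle_dec t1 t2) as [H12|H12].
    + rewrite Rabs_minus_sym, Rabs_pos_eq in Hd by lra. pose proof (per_mono t1 t2 ltac:(lra) H12 ltac:(lra)).
      pose proof (key t1 t2 H1 H2 H12 Hd). rewrite Rabs_pos_eq; lra.
    + apply Rnot_le_lt in H12. rewrite Rabs_pos_eq in Hd by lra. pose proof (per_mono t2 t1 ltac:(lra) ltac:(lra) ltac:(lra)).
      pose proof (key t2 t1 H2 H1 ltac:(lra) ltac:(lra)). rewrite Rabs_left1; lra.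
Qed.
End Period.

Lemma claim2 : forall j, (j <= m)%nat -> forall beta, (forall t, 0 <= t -> beta t = freeze al (p j) t) ->
  p j < 1 -> 0 < al (p j) <= a ->
  W j (al (p j)) <= Kpay P1 P2 A1 A2 j eta beta.
Proof.
  induction j as [|j IH]; intros Hjm beta Hb Hp1 Hx.
  - simpl. unfold W, Pi; simpl. rewrite Hb, freeze_max by lra.
    rewrite Rmax_left by (apply p_nonneg; lia).
    destruct (Rlt_dec 0 (al (p 0))); lra.
  - set (k := S j) in *. assert (Hk : (1 <= k <= m)%nat) by (unfold k; lia).
    destruct (p_le_eta k Hk) as [Hpp0 Hppe].
    pose proof (eta_rng k Hk) as He01.
    set (e := eta k) in *. set (pp := p k) in *. set (x := al pp) in *. set (y := al e).
    assert (Hpj : p j = e) by (apply p2_S; lia).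
    assert (Hbm : forall t, 0 <= t -> beta t = al (Rmax pp t)) by (intros; rewrite Hb, freeze_max; auto).
    assert (Hb' : forall t, 0 <= t -> freeze beta e t = freeze al (p j) t).
    { intros t Ht. rewrite Hpj, !freeze_max by auto. rewrite Hbm.
      - f_equal. unfold Rmax; repeat destruct Rle_dec; lra.
      - unfold Rmax; repeat destruct Rle_dec; lra. }
    assert (Hb0 : beta 0 = x) by (rewrite Hbm by lra; unfold x; f_equal; unfold Rmax; repeat destruct Rle_dec; lra).
    assert (Hbe : beta e = y) by (rewrite Hbm by lra; unfold y; f_equal; unfold Rmax; repeat destruct Rle_dec; lra).
    assert (Hper := per k Hk). fold pp e in Hper. change (al pp) with x in Hper.
    assert (Hmono : MonoD beta 0 e).
    { intros p' q H1 H2 H3. rewrite !Hbm by lra.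
      unfold Rmax; repeat destruct Rle_dec; try lra; try (apply (per_mono k Hk); fold pp e; lra). }
    assert (HUC : UC beta 0 e).
    { apply (UC_ext (fun t => al (Rmax pp t))); [intros; rewrite Hbm; auto; lra|].
      apply UC_shift; [lra|]. apply (per_UC k Hk). }
    assert (Hrange : forall t, 0 <= t <= e -> 0 <= beta t <= x).
    { intros t Ht. rewrite Hbm by lra. unfold Rmax; destruct Rle_dec.
      - destruct (Hper t ltac:(split; lra)) as [[? ?] _]. split; lra.
      - destruct (Hper pp ltac:(split; lra)) as [[? ?] _]. unfold x; split; lra. }
    assert (Hyx : y <= x) by (rewrite <- Hbe, <- Hb0; apply Hmono; lra).
    assert (HTy : e <= T k y) by (destruct (Hper e ltac:(split; lra)) as [_ [? _]]; auto).
    assert (HPe : 0 <= P2 e <= 1) by (apply Prange; auto; split; lra).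
    assert (Hln : forall t, 0 <= t <= e -> t < 1 -> beta t < beta 0 -> lnq P1 t <= gk k (beta t)).
    { intros t Ht Ht1 Hlt. rewrite Hb0 in Hlt. rewrite Hbm in * by lra.
      destruct (Rle_dec pp t) as [Hge|Hlt'].
      2:{ replace (Rmax pp t) with pp in Hlt by (unfold Rmax; repeat destruct Rle_dec; lra). unfold x in Hlt; lra. }
      replace (Rmax pp t) with t in * by (unfold Rmax; repeat destruct Rle_dec; lra).
      assert (HTt : T k (al t) <= t) by (apply (per_eq k Hk); fold pp e; [split; lra|exact Hlt]).
      destruct (Hper t ltac:(split; lra)) as [[? ?] _].
      unfold gk, lnq. apply ln_le'. { pose proof (Plt1 P1 HP1 t ltac:(split; lra)). lra. }
      assert (P1 (T k (al t)) <= P1 t) by (apply Pmono; auto; [left; apply Tpos'; lia || lra|lra]). lra. }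
    assert (HFFu : forall u, 0 < u <= e -> u < 1 -> 0 < beta u ->
      FF P1 beta u <= exp (Rint (gk k) (beta u) x)).
    { intros u Hu Hu1 Hbu. unfold FF. apply exp_le'. rewrite <- Hb0.
      apply RS_upper_cmp; [lra| | | | |].
      - apply lnq_UC; auto; lra.
      - intros p' q ? ? ?; apply Hmono; lra.
      - apply (UC_sub beta 0 e); auto; lra.
      - rewrite Hb0. apply gk_contab; [lia|auto].
      - intros t Ht Hlt. apply Hln; auto; lra. }
    change (Kpay P1 P2 A1 A2 k eta beta) with (Kpay P1 P2 A1 A2 (S j) eta beta). cbn [Kpay].
    change (eta (S j)) with e.
    destruct (Rle_lt_or_eq_dec e 1 (proj2 He01)) as [He1|He1].
    +
      assert (Hy : 0 < y) by (apply (per_pos k Hk); fold pp e; [split; lra|auto|unfold x in Hx; lra]).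
      assert (HIH : W j y <= Kpay P1 P2 A1 A2 j eta (freeze beta e)).
      { replace y with (al (p j)) by (rewrite Hpj; auto). apply IH; auto; [lia|rewrite Hpj; lra|].
        rewrite Hpj. fold y. lra. }
      rewrite (phi_lt1 P1 beta e He1). set (FFe := FF P1 beta e).
      assert (HFFe : FFe <= exp (Rint (gk k) y x)).
      { destruct (Rle_lt_or_eq_dec 0 e (proj1 He01)) as [He0|He0].
        - rewrite <- Hbe. apply HFFu; auto; [split; lra|rewrite Hbe; auto].
        - unfold FFe, FF. rewrite <- He0, RS_int_deg, Ropp_0, exp_0.
          assert (y = x) by (rewrite <- Hbe, <- Hb0, He0; auto). rewrite H.
          rewrite (Rint_eq _ _ _ (RiemannInt_P7 (gk k) x)), RiemannInt_P9, exp_0. lra. }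
      assert (HFpos : 0 < FFe) by apply exp_pos.
      assert (Hrat := E_ratio k x y Hk Hy Hyx ltac:(lra)).
      set (E := exp (Rint (gk k) y x)) in *.
      pose proof (Pi_range k y ltac:(lra)). pose proof (Pi_range j y ltac:(lra)).
      assert (HPiy : Pi k y = Pi j y * (1 - P2 (T k y))) by (unfold k; rewrite Pi_S; auto).
      assert (HP2T : P2 e <= P2 (T k y)) by (apply Pmono; auto; [lra|apply Tle1'; lia || lra]).
      assert (HA : Pi k y <= (1 - P2 e) * Pi j y) by (rewrite HPiy; nra).
      assert (HA0 : 0 <= 1 - (1 - P2 e) * Pi j y) by nra.
      replace (1 - (1 - FFe)) with FFe by ring.
      assert ((1 - P2 e) * FFe * W j y <= (1 - P2 e) * FFe * Kpay P1 P2 A1 A2 j eta (freeze beta e)).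
      { apply Rmult_le_compat_l; auto. apply Rmult_le_pos; lra. }
      eapply Rle_trans; [|apply Rplus_le_compat_l; exact H1].
      unfold W.
      assert (L1 : A1 * (1 - FFe) - A2 * FFe * P2 e + (1 - P2 e) * FFe * ((A1 + A2) * Pi j y - A2)
        = A1 - (A1 + A2) * FFe * (1 - (1 - P2 e) * Pi j y)) by ring.
      assert (L2 : (A1 + A2) * Pi k x - A2 = A1 - (A1 + A2) * ((1 - Pi k y) * E)) by (rewrite <- Hrat; ring).
      rewrite L1, L2.
      assert (FFe * (1 - (1 - P2 e) * Pi j y) <= E * (1 - Pi k y)).
      { apply Rle_trans with (FFe * (1 - Pi k y)); [apply Rmult_le_compat_l; lra|].
        apply Rmult_le_compat_r; lra. }
      nra.
    +
      assert (HP2e : P2 e = 1) by (rewrite He1; apply P1'; auto).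
      rewrite HP2e. replace (1 - 1) with 0 by ring.
      assert (Hmono1 : MonoD beta 0 1) by (rewrite <- He1; auto).
      destruct (phi_one P1 beta HP1 Hmono1) as [L [HL [HL1 HL2]]]. rewrite He1, HL.
      assert (HL0 : L <= 1).
      { pose proof (HL1 0 ltac:(split; lra)). unfold FF in H. rewrite RS_int_deg, Ropp_0, exp_0 in H. lra. }
      assert (HL0' : 0 <= L).
      { destruct (HL2 1 ltac:(lra)) as [u [Hu Hf]]. pose proof (HL1 u Hu). apply Rnot_lt_le; intro.
        assert (0 < FF P1 beta u) by apply exp_pos.
        destruct (HL2 (- L) ltac:(lra)) as [u' [Hu' Hf']]. pose proof (exp_pos (- RS_int (lnq P1) beta 0 u')).
        unfold FF in Hf'. lra. }
      assert (HLB : L <= 1 - Pi k x).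
      { apply Rnot_lt_le; intro Hlt. set (dl := L - (1 - Pi k x)).
        destruct (Pi_small k ltac:(lia) dl ltac:(unfold dl; lra)) as [z0 [Hz0 Hsmall]].
        set (z1 := Rmin z0 x). assert (Hz1 : 0 < z1) by (unfold z1; apply Rmin_pos; lra).
        pose proof (Rmin_l z0 x). pose proof (Rmin_r z0 x). fold z1 in H, H0.
        set (u := Rmax pp (T k z1)).
        assert (HTz : 0 < T k z1 < 1) by (split; [apply Tpos'; lia || lra|apply Tlt1'; lia || lra]).
        assert (Hu : pp <= u /\ T k z1 <= u /\ u < 1 /\ 0 < u).
        { unfold u, Rmax; destruct Rle_dec; repeat split; lra. }
        assert (Hal_u : al u <= z1).
        { apply Rnot_lt_le; intro Hgt. destruct (Hper u ltac:(split; lra)) as [_ [HTu _]].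
          pose proof (Tstrict' k ltac:(lia) z1 (al u) ltac:(lra) Hgt). lra. }
        assert (Hal_pos : 0 < al u) by (apply (per_pos k Hk); fold pp e; [split; lra|lra|unfold x in Hx; lra]).
        assert (Hbu : beta u = al u) by (rewrite Hbm by lra; f_equal; unfold Rmax; repeat destruct Rle_dec; lra).
        assert (HFu := HFFu u ltac:(split; lra) ltac:(lra) ltac:(rewrite Hbu; auto)).
        rewrite Hbu in HFu. pose proof (HL1 u ltac:(split; lra)).
        assert (Hbx : al u <= x) by (rewrite <- Hbu; apply Hrange; lra).
        assert (Hrat := E_ratio k x (al u) Hk Hal_pos Hbx ltac:(lra)).
        specialize (Hsmall (al u) ltac:(split; lra)).
        pose proof (Pi_range k (al u) ltac:(lra)).
        assert (L * (1 - Pi k (al u)) <= 1 - Pi k x).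
        { rewrite Hrat, (Rmult_comm L). apply Rmult_le_compat_l; lra. }
        unfold dl in Hsmall. nra. }
      unfold W. nra.
Qed.
End Part2.

End Game.


Theorem theorem2 (P1 P2 : R -> R) (A1 A2 a : R) (m : nat) (T : nat -> R -> R) :
  effectiveness P1 -> effectiveness P2 ->
  0 < A1 -> 0 < A2 -> 0 < a ->
  class_T T ->
  (forall (x : R) (k : nat), 0 < x <= a -> (1 <= k <= m)%nat ->
     exp_int0 (fun al => ln (1 - P1 (T k al))) x
     + prodR k (fun i => 1 - P2 (T i x)) = 1) ->
  let v := (A1 + A2) * prodR m (fun i => 1 - P2 (T i a)) - A2 in
  (forall (alpha : R -> R) (eta : nat -> R),
     consumption_fn a alpha -> T_response_II T m alpha eta ->
     Kpay P1 P2 A1 A2 m eta alpha <= v) /\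
  (forall (eta : nat -> R) (alpha : R -> R),
     action_moments m eta -> T_response_I T a m eta alpha ->
     v <= Kpay P1 P2 A1 A2 m eta alpha) /\
  ((1 <= m)%nat ->
     v = A1 - (A1 + A2) * exp_int0 (fun al => ln (1 - P1 (T m al))) a).
Proof.
  intros HP1 HP2 HA1 HA2 Ha HT Hyp v.
  assert (Hpm : forall eta, prev_moment m eta m = 0) by (intros; unfold prev_moment; rewrite Nat.eqb_refl; auto).
  assert (Hfr : forall al t, 0 <= t -> al t = freeze al 0 t).
  { intros al t Ht. unfold freeze. destruct (Rlt_dec t 0); [lra|auto]. }
  split; [|split].
  - intros al eta Hal Heta.
    assert (Hal0 : al 0 = a) by apply Hal.
    pose proof (claim1 P1 P2 A1 A2 a m T HP1 HP2 HA1 HA2 HT Hyp al eta Hal Heta m (le_n m) al) as C.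
    rewrite Hpm, Hal0 in C. apply C.
    + intros t Ht. apply Hfr; auto.
    + split; lra.
    + intros Hm. left. apply (HT m Hm). auto.
  - intros eta al Ham Hres.
    assert (Hal0 : al 0 = a) by apply Hres.
    pose proof (claim2 P1 P2 A1 A2 a m T HP1 HP2 HA1 HA2 HT Hyp eta al Ham Hres m (le_n m) al) as C.
    rewrite Hpm, Hal0 in C. apply C.
    + intros t Ht. apply Hfr; auto.
    + lra.
    + split; lra.
  - intros Hm. unfold v. pose proof (Hyp a m ltac:(split; lra) ltac:(split; lia)) as E.
    replace (prodR m (fun i => 1 - P2 (T i a))) with (1 - exp_int0 (fun al => ln (1 - P1 (T m al))) a) by lra.
    ring.
Qed.
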